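(* Let $\beta>0$ and let $M_\beta$ be the flat Möbius strip of width $2\beta$ with flat metric $g_{flat}$. Let $g=\phi^2 g_{flat}$ be a Riemannian metric on $M_\beta$ ($\phi$ smooth and positive) which is $H_\beta$-invariant. Then the (continuous) metric $P_{\phi_\beta}(\phi)^2 g_{flat}$ satisfies $$\mathrm{area}(M_\beta,\phi^2 g_{flat})=\mathrm{area}(M_\beta,P_{\phi_\beta}(\phi)^2 g_{flat})+\|\phi-P_{\phi_\beta}(\phi)\|_{L^2}^2,\qquad \mathrm{sys}(M_\beta,\phi^2 g_{flat})\le \mathrm{sys}(M_\beta,P_{\phi_\beta}(\phi)^2 g_{flat}).$$
   Context: Let $S_\beta=\mathbb{R}\times[-\beta,\beta]\subset\mathbb{R}^2$ with the Euclidean metric, let $A(x,y)=(x+\pi,-y)$ and let $M_\beta=S_\beta/\{A^k:k\in\mathbb{Z}\}$ with the induced flat metric $g_{flat}$ (so that the quotient map $p:S_\beta\to M_\beta$ is a local isometry); functions on $M_\beta$ are identified with $A$-invariant functions on $S_\beta$. $H_\beta=\mathrm{Isom}(M_\beta,g_{flat})$ consists of the maps induced by the translations $(x,y)\mapsto(x+h,y)$, $h\in\mathbb{R}$; a function (or conformal metric) is $H_\beta$-invariant iff $\phi$ is independent of $x$ (it is then even in $y$). Let $\phi_0(y)=\frac{2e^y}{1+e^{2y}}$, $\beta_1=\log(2+\sqrt3)$, and $\phi_\beta(p(x,y))=\max\{\phi_0(y),\tfrac12\}$ (equal to $\phi_0(y)$ for $|y|\le\beta_1$ and $\tfrac12$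 for $|y|>\beta_1$), a continuous positive function. $P_{\phi_\beta}:L^2(M_\beta,g_{flat})\to L^2(M_\beta,g_{flat})$, $P_{\phi_\beta}(\phi)=\frac{(\phi,\phi_\beta)_{L^2}}{(\phi_\beta,\phi_\beta)_{L^2}}\phi_\beta$, is the orthogonal projection onto $\mathbb{R}\phi_\beta$, with $L^2$ taken with respect to $g_{flat}$. For a (possibly only continuous) conformal metric $\psi^2 g_{flat}$, the length of a curve $\gamma$ is $\int\psi(\gamma)|\gamma'|_{g_{flat}}dt$, the area is $\int\psi^2\,d\mathrm{vol}_{g_{flat}}$, and the systole $\mathrm{sys}$ is the infimum of lengths of noncontractible closed curves. *)

(* Defs.v *)
From Stdlib Require Import Reals Lra.
From Coquelicot Require Import Coquelicot.
Open Scope R_scope.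

(* A function on M_beta is represented by an A-invariant function on the
   strip S_beta = R x [-beta,beta], given as f : R -> R -> R (f x y). *)

Fixpoint Ck2 (k : nat) (f : R -> R -> R) : Prop :=
  match k with
  | O => forall x y, continuous (fun p : R * R => f (fst p) (snd p)) (x, y)
  | S k' =>
      (forall x y, continuous (fun p : R * R => f (fst p) (snd p)) (x, y)) /\
      (forall x y, ex_derive (fun u => f u y) x) /\
      (forall x y, ex_derive (fun v => f x v) y) /\
      Ck2 k' (fun x y => Derive (fun u => f u y) x) /\
      Ck2 k' (fun x y => Derive (fun v => f x v) y)
  end.

Definition smooth2 (f : R -> R -> R) : Prop := forall k, Ck2 k f.

(* The deck transformation A(x,y) = (x+pi,-y) and its powers. *)
Definition Apow (k : Z) (p : R * R) : R * R :=
  (fst p + IZR k * PI, powerRZ (-1) k * snd p).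

Definition phi0 (y : R) : R := 2 * exp y / (1 + exp (2 * y)).
Definition phib (x y : R) : R := Rmax (phi0 y) (1 / 2).

(* L^2 inner product on (M_beta, g_flat), computed on the fundamental
   domain [0,pi] x [-beta,beta]. *)
Definition L2ip (beta : R) (f g : R -> R -> R) : R :=
  RInt (fun x => RInt (fun y => f x y * g x y) (- beta) beta) 0 PI.

Definition L2norm2 (beta : R) (f : R -> R -> R) : R := L2ip beta f f.

Definition Pphib (beta : R) (f : R -> R -> R) : R -> R -> R :=
  fun x y => (L2ip beta f phib / L2ip beta phib phib) * phib x y.

Definition area (beta : R) (psi : R -> R -> R) : R :=
  RInt (fun x => RInt (fun y => (psi x y) ^ 2) (- beta) beta) 0 PI.

Definition C1_path_in_strip (beta : R) (g1 g2 : R -> R) : Prop :=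
  (forall t, 0 <= t <= 1 -> ex_derive g1 t /\ ex_derive g2 t) /\
  (forall t, 0 <= t <= 1 -> continuous (Derive g1) t /\ continuous (Derive g2) t) /\
  (forall t, 0 <= t <= 1 -> - beta <= g2 t <= beta).

(* Lift to S_beta of a noncontractible closed curve of M_beta:
   the endpoint is A^k of the start point with k <> 0. *)
Definition noncontractible_loop_lift (beta : R) (g1 g2 : R -> R) : Prop :=
  C1_path_in_strip beta g1 g2 /\
  exists k : Z, k <> 0%Z /\ (g1 1, g2 1) = Apow k (g1 0, g2 0).

Definition curve_length (psi : R -> R -> R) (g1 g2 : R -> R) : R :=
  RInt (fun t => psi (g1 t) (g2 t) *
                 sqrt ((Derive g1 t) ^ 2 + (Derive g2 t) ^ 2)) 0 1.

Definition sys (beta : R) (psi : R -> R -> R) : Rbar :=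
  Glb_Rbar (fun L => exists g1 g2 : R -> R,
               noncontractible_loop_lift beta g1 g2 /\ L = curve_length psi g1 g2).

(* Main.v *)
Require Import Defs.
From Stdlib Require Import Reals Lra Psatz ZArith FunctionalExtensionality.
From Coquelicot Require Import Coquelicot.
Open Scope R_scope.

Lemma cont_of_der (f : R -> R) x : ex_derive f x -> continuous f x.
Proof. intros H. apply (ex_derive_continuous (K:=R_AbsRing) (V:=R_NormedModule)). exact H. Qed.

Lemma cont_sin x : continuous sin x.
Proof. apply cont_of_der. auto_derive. auto. Qed.
Lemma cont_cos x : continuous cos x.
Proof. apply cont_of_der. auto_derive. auto. Qed.
Lemma cont_exp x : continuous exp x.
Proof. apply cont_of_der. auto_derive. auto. Qed.
Lemma cont_atan x : continuous atan x.
Proof. apply cont_of_der. auto_derive. auto. Qed.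
Lemma cont_inv x : x <> 0 -> continuous Rinv x.
Proof. intros. apply cont_of_der. auto_derive. auto. Qed.
Lemma cont_ln x : 0 < x -> continuous ln x.
Proof. intros. apply cont_of_der. auto_derive. auto. Qed.
Lemma cont_pow n x : continuous (fun y => y ^ n) x.
Proof. apply cont_of_der. auto_derive. auto. Qed.
Lemma cont_sqrt x : continuous sqrt x.
Proof. apply continuous_sqrt. Qed.

Lemma div_le_l a b D : 0 < D -> a <= b * D -> a / D <= b.
Proof. intros HD H. apply Rmult_le_reg_r with D; auto.
  replace (a / D * D) with a by (field; lra). lra. Qed.
Lemma div_ge_l a b D : 0 < D -> b * D <= a -> b <= a / D.
Proof. intros HD H. apply Rmult_le_reg_r with D; auto.
  replace (a / D * D) with a by (field; lra). lra. Qed.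
Lemma div_lt_l a b D : 0 < D -> a < b * D -> a / D < b.
Proof. intros HD H. apply Rmult_lt_reg_r with D; auto.
  replace (a / D * D) with a by (field; lra). lra. Qed.
Lemma div_gt_l a b D : 0 < D -> b * D < a -> b < a / D.
Proof. intros HD H. apply Rmult_lt_reg_r with D; auto.
  replace (a / D * D) with a by (field; lra). lra. Qed.


Ltac cont :=
  repeat match goal with
  | |- continuous (fun _ => ?c) _ => apply continuous_const
  | |- continuous (fun t => t) _ => apply continuous_id
  | |- continuous (fun t => @?a t + @?b t) _ => apply (continuous_plus a b)
  | |- continuous (fun t => @?a t - @?b t) _ => apply (continuous_minus a b)
  | |- continuous (fun t => @?a t * @?b t) _ => apply (continuous_mult a b)
  | |- continuous (fun t => @?a t / @?b t) _ =>
      apply (continuous_mult a (fun t => / b t))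
  | |- continuous (fun t => - @?a t) _ => apply (continuous_opp a)
  | |- continuous (fun t => / @?a t) _ => apply (continuous_comp a Rinv); [|apply cont_inv]
  | |- continuous (fun t => sin (@?a t)) _ => apply (continuous_comp a sin); [|apply cont_sin]
  | |- continuous (fun t => cos (@?a t)) _ => apply (continuous_comp a cos); [|apply cont_cos]
  | |- continuous (fun t => exp (@?a t)) _ => apply (continuous_comp a exp); [|apply cont_exp]
  | |- continuous (fun t => atan (@?a t)) _ => apply (continuous_comp a atan); [|apply cont_atan]
  | |- continuous (fun t => sqrt (@?a t)) _ => apply (continuous_comp a sqrt); [|apply cont_sqrt]
  | |- continuous (fun t => ln (@?a t)) _ => apply (continuous_comp a ln); [|apply cont_ln]
  | |- continuous (fun t => (@?a t) ^ ?n) _ => apply (continuous_comp a (fun y => y ^ n)); [|apply cont_pow]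
  | |- continuous sin _ => apply cont_sin
  | |- continuous cos _ => apply cont_cos
  | |- continuous exp _ => apply cont_exp
  end.

Lemma cont_test (g : R -> R) x : continuous g x -> continuous (fun t => sin (g t) * 3 + exp t / (1 + t*t) - sqrt (g t) ^ 2) x.
Proof. intros. cont; auto. nra. Qed.

Definition th (y : R) : R := (exp (2*y) - 1) / (exp (2*y) + 1).

Lemma exp2 y : exp (2*y) = exp y * exp y.
Proof. replace (2*y) with (y+y) by ring. apply exp_plus. Qed.

Lemma phi0_alt y : phi0 y = 2 * exp y / (1 + exp y * exp y).
Proof. unfold phi0. now rewrite exp2. Qed.

Lemma phi0_pos y : 0 < phi0 y.
Proof. rewrite phi0_alt. pose proof (exp_pos y). apply Rdiv_lt_0_compat; nra. Qed.

Lemma phi0_le1 y : phi0 y <= 1.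
Proof. rewrite phi0_alt. pose proof (exp_pos y).
  pose proof (pow2_ge_0 (exp y - 1)). apply div_le_l; nra. Qed.

Lemma th_alt y : th y = (exp y * exp y - 1) / (exp y * exp y + 1).
Proof. unfold th. now rewrite exp2. Qed.

Lemma phi0_th y : phi0 y ^ 2 + th y ^ 2 = 1.
Proof. rewrite phi0_alt, th_alt. pose proof (exp_pos y). field. nra. Qed.

Lemma th_bound y : -1 < th y < 1.
Proof. rewrite th_alt. pose proof (exp_pos y). set (e := exp y * exp y).
  assert (0 < e) by (unfold e; apply Rmult_lt_0_compat; lra).
  split; [apply div_gt_l|apply div_lt_l]; lra. Qed.

Lemma exp_opp' y : exp (-y) = / exp y.
Proof. apply exp_Ropp. Qed.

Lemma phi0_even y : phi0 (-y) = phi0 y.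
Proof. rewrite !phi0_alt, exp_opp'. pose proof (exp_pos y). field. nra. Qed.

Lemma th_odd y : th (-y) = - th y.
Proof. rewrite !th_alt, exp_opp'. pose proof (exp_pos y). field. nra. Qed.

Lemma th_0 : th 0 = 0.
Proof. unfold th. rewrite Rmult_0_r, exp_0. field. Qed.

Lemma is_derive_phi0 y : is_derive phi0 y (- (phi0 y * th y)).
Proof.
  assert (H: forall z, phi0 z = 2 * exp z / (1 + exp z * exp z)) by apply phi0_alt.
  apply is_derive_ext with (fun z => 2 * exp z / (1 + exp z * exp z)).
  { intros; now rewrite H. }
  pose proof (exp_pos y).
  evar_last. auto_derive. nra. reflexivity.
  rewrite phi0_alt, th_alt. field. nra.
Qed.

Lemma is_derive_th y : is_derive th y (phi0 y ^ 2).
Proof.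
  apply is_derive_ext with (fun z => (exp z * exp z - 1) / (exp z * exp z + 1)).
  { intros; now rewrite th_alt. }
  pose proof (exp_pos y).
  evar_last. auto_derive. nra. reflexivity.
  rewrite phi0_alt. simpl. field. nra.
Qed.

Lemma RInt_minus_R f g a b : ex_RInt f a b -> ex_RInt g a b ->
  RInt (fun x => f x - g x) a b = RInt f a b - RInt g a b.
Proof. intros. exact (RInt_minus f g a b H H0). Qed.
Lemma RInt_plus_R f g a b : ex_RInt f a b -> ex_RInt g a b ->
  RInt (fun x => f x + g x) a b = RInt f a b + RInt g a b.
Proof. intros. exact (RInt_plus f g a b H H0). Qed.
Lemma RInt_scal_R f k a b : ex_RInt f a b ->
  RInt (fun x => k * f x) a b = k * RInt f a b.
Proof. intros. exact (RInt_scal f a b k H). Qed.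
Lemma RInt_const_R c a b : RInt (fun _ => c) a b = (b - a) * c.
Proof. exact (RInt_const a b c). Qed.
Lemma ex_RInt_cont (f : R -> R) a b : (forall x, Rmin a b <= x <= Rmax a b -> continuous f x) -> ex_RInt f a b.
Proof. intros. apply (ex_RInt_continuous (V:=R_CompleteNormedModule)). auto. Qed.
Lemma ex_RInt_cont' (f : R -> R) a b : a <= b -> (forall x, a <= x <= b -> continuous f x) -> ex_RInt f a b.
Proof. intros. apply (ex_RInt_continuous (V:=R_CompleteNormedModule)). rewrite Rmin_left, Rmax_right by lra. auto. Qed.

Lemma cont_eps (f : R -> R) x :
  (forall eps, 0 < eps -> exists d, 0 < d /\ forall y, Rabs (y - x) < d -> Rabs (f y - f x) < eps) ->
  continuous f x.
Proof.
  intros H. apply continuity_pt_filterlim. intros eps Heps.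
  destruct (H eps Heps) as [d [Hd Hf]]. exists d. split; auto.
  intros y [_ Hy]. apply Hf. exact Hy.
Qed.

Lemma eps_cont (f : R -> R) x : continuous f x ->
  forall eps, 0 < eps -> exists d, 0 < d /\ forall y, Rabs (y - x) < d -> Rabs (f y - f x) < eps.
Proof.
  intros H. apply continuity_pt_filterlim in H. intros eps Heps.
  destruct (H eps Heps) as [d [Hd Hf]]. exists d. split; auto.
  intros y Hy. destruct (Req_dec y x). subst. rewrite Rminus_diag, Rabs_R0. auto.
  apply Hf. split. split. exact I. auto. exact Hy.
Qed.

Definition Ein (g : R -> R) (a : R) : R := RInt (fun t => g (sin a * sin (PI * t))) 0 1.
Definition Eo (g : R -> R) : R := RInt (fun a => sin a * Ein g a) 0 (PI/2).
Definition Cg (g : R -> R) := forall z, -1 <= z <= 1 -> continuous g z.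

Lemma sinsin_range a t : -1 <= sin a * sin (PI*t) <= 1.
Proof. pose proof (SIN_bound a). pose proof (SIN_bound (PI*t)).
  assert (Rabs (sin a * sin (PI*t)) <= 1).
  { rewrite Rabs_mult. apply Rle_trans with (1*1). apply Rmult_le_compat; try apply Rabs_pos;
    apply Rabs_le; lra. lra. }
  apply Rabs_le_between in H1. lra. Qed.

Lemma ex_Ein g a : Cg g -> ex_RInt (fun t => g (sin a * sin (PI * t))) 0 1.
Proof. intros Hg. apply ex_RInt_cont. intros x _.
  apply (continuous_comp (fun t => sin a * sin (PI*t)) g). cont.
  apply Hg, sinsin_range. Qed.

Lemma Ein_cont g : Cg g -> forall a, continuous (Ein g) a.
Proof.
  intros Hg a. apply cont_eps. intros eps Heps.
  assert (Hc : forall z, -1 <= z <= 1 -> continuity_pt g z).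
  { intros z Hz. apply continuity_pt_filterlim. apply Hg; auto. }
  destruct (Heine_cor2 Hc (mkposreal (eps/2) ltac:(lra))) as [delta Hdelta]. simpl in Hdelta.
  destruct (eps_cont sin a (cont_sin a) delta (cond_pos delta)) as [d [Hd Hs]].
  exists d. split; auto. intros y Hy.
  unfold Ein. rewrite <- RInt_minus_R by (apply ex_Ein; auto).
  apply Rle_lt_trans with ((1 - 0) * (eps/2)); [|lra].
  apply abs_RInt_le_const. lra.
  apply (ex_RInt_minus (V:=R_CompleteNormedModule)); apply ex_Ein; auto.
  intros t Ht. left. apply Hdelta; try apply sinsin_range.
  rewrite <- Rmult_minus_distr_r, Rabs_mult.
  apply Rle_lt_trans with (Rabs (sin y - sin a) * 1).
  apply Rmult_le_compat_l. apply Rabs_pos. apply Rabs_le. apply SIN_bound.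
  rewrite Rmult_1_r. apply Hs. auto.
Qed.

Lemma ex_Eo g : Cg g -> ex_RInt (fun a => sin a * Ein g a) 0 (PI/2).
Proof. intros Hg. apply ex_RInt_cont. intros x _.
  apply (continuous_mult sin (Ein g)). apply cont_sin. apply Ein_cont; auto. Qed.

Definition Agree (g : R -> R) := Cg g /\ Eo g = RInt g 0 1.

Lemma Cg_plus g h : Cg g -> Cg h -> Cg (fun z => g z + h z).
Proof. intros Hg Hh z Hz. apply (continuous_plus g h); auto. Qed.
Lemma Cg_scal g k : Cg g -> Cg (fun z => k * g z).
Proof. intros Hg z Hz. apply (continuous_mult (fun _ => k) g); auto. apply continuous_const. Qed.

Lemma ex01 g : Cg g -> ex_RInt g 0 1.
Proof. intros Hg. apply ex_RInt_cont. intros x Hx. apply Hg.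
  rewrite Rmin_left, Rmax_right in Hx by lra. lra. Qed.

Lemma Agree_plus g h : Agree g -> Agree h -> Agree (fun z => g z + h z).
Proof.
  intros [Hg Eg] [Hh Eh]. split. apply Cg_plus; auto.
  unfold Eo. rewrite RInt_plus_R by (apply ex01; auto).
  rewrite <- Eg, <- Eh. unfold Eo. rewrite <- RInt_plus_R by (apply ex_Eo; auto).
  apply (RInt_ext (V:=R_CompleteNormedModule)). intros x _. unfold Ein. rewrite RInt_plus_R by (apply ex_Ein; auto). lra.
Qed.

Lemma Agree_scal g k : Agree g -> Agree (fun z => k * g z).
Proof.
  intros [Hg Eg]. split. apply Cg_scal; auto.
  unfold Eo. rewrite RInt_scal_R by (apply ex01; auto).
  rewrite <- Eg. unfold Eo. rewrite <- RInt_scal_R by (apply ex_Eo; auto).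
  apply (RInt_ext (V:=R_CompleteNormedModule)). intros x _. unfold Ein. rewrite RInt_scal_R by (apply ex_Ein; auto). lra.
Qed.

Lemma Agree_ext g h : Agree g -> (forall z, g z = h z) -> Agree h.
Proof. intros Hg E. replace h with g. auto. apply functional_extensionality; auto. Qed.

Definition Aw (m : nat) : R := RInt (fun t => sin (PI*t) ^ m) 0 1.
Definition Bw (m : nat) : R := RInt (fun a => sin a ^ m) 0 (PI/2).

Lemma RInt_derive_R (F f : R -> R) a b :
  (forall x, Rmin a b <= x <= Rmax a b -> is_derive F x (f x)) ->
  (forall x, Rmin a b <= x <= Rmax a b -> continuous f x) ->
  RInt f a b = F b - F a.
Proof. intros. apply is_RInt_unique. exact (is_RInt_derive F f a b H H0). Qed.

Lemma PI2_pos : 0 < PI/2.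
Proof. pose proof PI_RGT_0. lra. Qed.

Ltac fixS m := try change (match m with | 0%nat => 1 | S _ => INR m + 1 end) with (INR (S m)); rewrite ?S_INR, ?plus_INR.

Lemma Bw_rec m : INR (m+2) * Bw (m+2) = INR (m+1) * Bw m.
Proof.
  pose (F := fun a => - (sin a ^ (S m) * cos a)).
  pose (f := fun a => INR (m+2) * (sin a ^ 2 * sin a ^ m) - INR (m+1) * sin a ^ m).
  assert (HI : RInt f 0 (PI/2) = F (PI/2) - F 0).
  { apply RInt_derive_R.
    - intros x _. unfold F, f. evar_last. auto_derive. auto. reflexivity.
      fixS m. pose proof (sin2_cos2 x). unfold Rsqr in H.
      replace (INR 2) with 2 by (simpl; ring). replace (INR 1) with 1 by (simpl; ring).
      replace (cos x) with (cos x) by auto.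
      transitivity (- (INR m + 1) * sin x ^ m * (cos x * cos x) + sin x ^ 2 * sin x ^ m). ring.
      replace (cos x * cos x) with (1 - sin x * sin x) by lra. ring.
    - intros x _. unfold f. cont. }
  unfold F in HI. rewrite cos_PI2, sin_0 in HI. simpl in HI.
  replace (- (sin (PI / 2) * sin (PI / 2) ^ m * 0) - - (0 * 0 ^ m * cos 0)) with 0 in HI by ring.
  unfold f in HI. rewrite RInt_minus_R, !RInt_scal_R in HI.
  - unfold Bw. 
    replace (fun a => sin a ^ (m+2)) with (fun a => sin a ^ 2 * sin a ^ m). lra.
    apply functional_extensionality. intros. rewrite <- pow_add. f_equal. lia.
  - apply ex_RInt_cont. intros; cont.
  - apply ex_RInt_cont. intros; cont.
  - apply ex_RInt_cont. intros; cont.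
  - apply ex_RInt_cont. intros; cont.
Qed.

Lemma Aw_rec m : INR (m+2) * Aw (m+2) = INR (m+1) * Aw m.
Proof.
  pose proof PI_RGT_0.
  pose (F := fun t => - (sin (PI*t) ^ (S m) * cos (PI*t)) / PI).
  pose (f := fun t => INR (m+2) * (sin (PI*t) ^ 2 * sin (PI*t) ^ m) - INR (m+1) * sin (PI*t) ^ m).
  assert (HI : RInt f 0 1 = F 1 - F 0).
  { apply RInt_derive_R.
    - intros x _. unfold F, f. evar_last. auto_derive. auto. reflexivity.
      fixS m. pose proof (sin2_cos2 (PI*x)). unfold Rsqr in H0.
      replace (INR 2) with 2 by (simpl; ring). replace (INR 1) with 1 by (simpl; ring).
      transitivity (- (INR m + 1) * sin (PI*x) ^ m * (cos (PI*x) * cos (PI*x)) + sin (PI*x) ^ 2 * sin (PI*x) ^ m). field. lra.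
      replace (cos (PI*x) * cos (PI*x)) with (1 - sin (PI*x) * sin (PI*x)) by lra. ring.
    - intros x _. unfold f. cont. }
  unfold F in HI. rewrite Rmult_1_r, Rmult_0_r, sin_PI, sin_0 in HI. simpl in HI.
  replace (- (0 * 0 ^ m * cos PI) / PI - - (0 * 0 ^ m * cos 0) / PI) with 0 in HI by (field; lra).
  unfold f in HI. rewrite RInt_minus_R, !RInt_scal_R in HI.
  - unfold Aw.
    replace (fun t => sin (PI*t) ^ (m+2)) with (fun t => sin (PI*t) ^ 2 * sin (PI*t) ^ m). lra.
    apply functional_extensionality. intros. rewrite <- pow_add. f_equal. lia.
  - apply ex_RInt_cont. intros; cont.
  - apply ex_RInt_cont. intros; cont.
  - apply ex_RInt_cont. intros; cont.
  - apply ex_RInt_cont. intros; cont.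
Qed.

Lemma Aw0 : Aw 0 = 1.
Proof. unfold Aw. simpl. rewrite RInt_const_R. ring. Qed.
Lemma Bw0 : Bw 0 = PI/2.
Proof. unfold Bw. simpl. rewrite RInt_const_R. ring. Qed.
Lemma Bw1 : Bw 1 = 1.
Proof. unfold Bw. rewrite (RInt_derive_R (fun a => - cos a)).
  rewrite cos_PI2, cos_0. lra.
  intros. evar_last. auto_derive. auto. reflexivity. simpl. ring.
  intros. cont. Qed.
Lemma Aw1 : Aw 1 = 2 / PI.
Proof. pose proof PI_RGT_0. unfold Aw. rewrite (RInt_derive_R (fun t => - cos (PI*t) / PI)).
  rewrite Rmult_1_r, Rmult_0_r, cos_PI, cos_0. field. lra.
  intros. evar_last. auto_derive. auto. reflexivity. simpl. field. lra.
  intros. cont. Qed.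

Lemma Wallis m : Aw m * Bw (S m) = / INR (S m).
Proof.
  pose proof PI_RGT_0.
  assert (forall m, Aw m * Bw (S m) = / INR (S m) /\ Aw (S m) * Bw (S (S m)) = / INR (S (S m))).
  { induction m0.
    - split. rewrite Aw0, Bw1. simpl. field.
      pose proof (Bw_rec 0). change (0+2)%nat with 2%nat in H0; change (0+1)%nat with 1%nat in H0. replace (INR 2) with 2 in H0 by (simpl; ring). replace (INR 1) with 1 in H0 by reflexivity. rewrite Bw0 in H0.
      rewrite Aw1. replace (Bw 2) with (PI/4) by lra. simpl. field. lra.
    - destruct IHm0 as [H1 H2]. split. auto.
      pose proof (Aw_rec m0). pose proof (Bw_rec (S m0)).
      replace (m0+2)%nat with (S (S m0)) in H0 by lia.
      replace (m0+1)%nat with (S m0) in H0 by lia.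
      replace (S m0+2)%nat with (S (S (S m0))) in H3 by lia.
      replace (S m0+1)%nat with (S (S m0)) in H3 by lia.
      rewrite !S_INR in *.
      pose proof (pos_INR m0).
      assert (Aw (S (S m0)) = (INR m0 + 1) / (INR m0 + 1 + 1) * Aw m0).
      { apply Rmult_eq_reg_l with (INR m0 + 1 + 1). rewrite H0. field. lra. lra. }
      assert (Bw (S (S (S m0))) = (INR m0 + 1 + 1) / (INR m0 + 1 + 1 + 1) * Bw (S m0)).
      { apply Rmult_eq_reg_l with (INR m0 + 1 + 1 + 1). rewrite H3. field. lra. lra. }
      rewrite H5, H6.
      replace ((INR m0 + 1) / (INR m0 + 1 + 1) * Aw m0 * ((INR m0 + 1 + 1) / (INR m0 + 1 + 1 + 1) * Bw (S m0)))
        with ((INR m0 + 1) / (INR m0 + 1 + 1 + 1) * (Aw m0 * Bw (S m0))) by (field; lra).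
      rewrite H1. rewrite ?S_INR. field. lra. }
  exact (proj1 (H0 m)).
Qed.


Lemma Agree_mon m : Agree (fun z => z ^ m).
Proof.
  split. intros z _. apply cont_pow.
  assert (HE : forall a, Ein (fun z => z ^ m) a = sin a ^ m * Aw m).
  { intros a. unfold Ein, Aw. rewrite <- RInt_scal_R.
    apply (RInt_ext (V:=R_CompleteNormedModule)). intros. apply Rpow_mult_distr.
    apply ex_RInt_cont. intros; cont. }
  unfold Eo. rewrite (RInt_ext (V:=R_CompleteNormedModule) _ (fun a => Aw m * sin a ^ (S m))).
  2:{ intros. rewrite HE. change (sin x ^ S m) with (sin x * sin x ^ m). lra. }
  rewrite RInt_scal_R. fold (Bw (S m)). rewrite Wallis.
  rewrite (RInt_derive_R (fun z => z ^ (S m) / INR (S m))).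
  rewrite pow_i, pow1 by lia. field. apply not_0_INR. lia.
  intros. evar_last. auto_derive. auto. reflexivity. fixS m. pose proof (pos_INR m). field. lra.
  intros. cont.
  apply ex_RInt_cont. intros; cont.
Qed.

Inductive Poly : (R -> R) -> Prop :=
| Pconst c : Poly (fun _ => c)
| Pplus p q : Poly p -> Poly q -> Poly (fun x => p x + q x)
| Pscal c p : Poly p -> Poly (fun x => c * p x)
| PmulX p : Poly p -> Poly (fun x => x * p x).

Lemma Poly_ext p q : Poly p -> (forall x, p x = q x) -> Poly q.
Proof. intros Hp E. replace q with p. auto. apply functional_extensionality; auto. Qed.

Lemma Poly_agree_aux p : Poly p -> forall m, Agree (fun x => x ^ m * p x).
Proof.
  induction 1; intros m.
  - apply Agree_ext with (fun x => c * x ^ m). apply Agree_scal, Agree_mon. intros; ring.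
  - apply Agree_ext with (fun x => x ^ m * p x + x ^ m * q x). apply Agree_plus; auto. intros; ring.
  - apply Agree_ext with (fun x => c * (x ^ m * p x)). apply Agree_scal; auto. intros; ring.
  - apply Agree_ext with (fun x => x ^ (S m) * p x). auto. intros; simpl; ring.
Qed.

Lemma Poly_agree p : Poly p -> Agree p.
Proof. intros H. apply Agree_ext with (fun x => x ^ 0 * p x). apply Poly_agree_aux; auto.
  intros; simpl; ring. Qed.

Fixpoint bb (n k : nat) (x : R) : R :=
  match n with
  | O => match k with O => 1 | S _ => 0 end
  | S n' => match k with
            | O => (1 - x) * bb n' O x
            | S k' => (1 - x) * bb n' (S k') x + x * bb n' k' x
            end
  end.

Lemma bb_poly n : forall k, Poly (bb n k).
Proof.
  induction n; intros k.
  - destruct k; simpl; apply Pconst.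
  - destruct k; simpl.
    + apply Poly_ext with (fun x => bb n 0 x + (-1) * (x * bb n 0 x)).
      apply Pplus; auto. apply Pscal, PmulX; auto. intros; ring.
    + apply Poly_ext with (fun x => (bb n (S k) x + (-1) * (x * bb n (S k) x)) + x * bb n k x).
      apply Pplus. apply Pplus; auto. apply Pscal, PmulX; auto. apply PmulX; auto. intros; ring.
Qed.

Lemma bb_gt n : forall k x, (n < k)%nat -> bb n k x = 0.
Proof.
  induction n; intros k x H.
  - destruct k. lia. reflexivity.
  - destruct k. lia. simpl. rewrite !IHn by lia. ring.
Qed.

Lemma bb_nonneg n : forall k x, 0 <= x <= 1 -> 0 <= bb n k x.
Proof.
  induction n; intros k x H.
  - destruct k; simpl; lra.
  - destruct k; simpl.
    + pose proof (IHn 0%nat x H). nra.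
    + pose proof (IHn (S k) x H). pose proof (IHn k x H). nra.
Qed.

Definition Sh (n : nat) (h : nat -> R) (x : R) : R := sum_f_R0 (fun k => h k * bb n k x) n.

Lemma sum_scal_l c (A : nat -> R) N : sum_f_R0 (fun i => c * A i) N = c * sum_f_R0 A N.
Proof. rewrite scal_sum. apply sum_eq. intros; ring. Qed.

Lemma Sh_ext n h1 h2 x : (forall k, h1 k = h2 k) -> Sh n h1 x = Sh n h2 x.
Proof. intros E. unfold Sh. apply sum_eq. intros. rewrite E. auto. Qed.
Lemma Sh_plus n h1 h2 x : Sh n (fun k => h1 k + h2 k) x = Sh n h1 x + Sh n h2 x.
Proof. unfold Sh. rewrite <- sum_plus. apply sum_eq. intros; ring. Qed.
Lemma Sh_scal n c h x : Sh n (fun k => c * h k) x = c * Sh n h x.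
Proof. unfold Sh. rewrite <- sum_scal_l. apply sum_eq. intros; ring. Qed.
Lemma Sh_le n h1 h2 x : 0 <= x <= 1 -> (forall k, (k <= n)%nat -> h1 k <= h2 k) -> Sh n h1 x <= Sh n h2 x.
Proof. intros Hx H. unfold Sh. apply sum_Rle. intros k Hk.
  apply Rmult_le_compat_r. apply bb_nonneg; auto. auto. Qed.

Lemma Sh_S n h x : Sh (S n) h x = (1 - x) * Sh n h x + x * Sh n (fun k => h (S k)) x.
Proof.
  unfold Sh.
  assert (E1 : sum_f_R0 (fun k => h k * bb n k x) (S n)
               = h 0%nat * bb n 0 x + sum_f_R0 (fun i => h (S i) * bb n (S i) x) n).
  { rewrite decomp_sum by lia. simpl Init.Nat.pred. reflexivity. }
  rewrite tech5, (bb_gt n (S n)), Rmult_0_r, Rplus_0_r in E1 by lia.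
  rewrite decomp_sum by lia. simpl Init.Nat.pred. simpl bb.
  rewrite E1.
  rewrite (sum_eq _ (fun i => (1 - x) * (h (S i) * bb n (S i) x) + x * (h (S i) * bb n i x))).
  2:{ intros; ring. }
  rewrite sum_plus, !sum_scal_l. ring.
Qed.

Lemma Sh_0 h x : Sh 0 h x = h 0%nat.
Proof. unfold Sh. simpl. ring. Qed.

Lemma mom0 n x : Sh n (fun _ => 1) x = 1.
Proof. induction n. rewrite Sh_0; auto. rewrite Sh_S, IHn. ring. Qed.

Lemma mom1 n x : Sh n INR x = INR n * x.
Proof. induction n. rewrite Sh_0; simpl; ring.
  rewrite Sh_S, IHn. rewrite (Sh_ext _ _ (fun k => INR k + 1)) by (intros; apply S_INR).
  rewrite Sh_plus, IHn, mom0, S_INR. ring. Qed.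

Lemma mom2 n x : Sh n (fun k => INR k ^ 2) x = INR n * (INR n - 1) * x ^ 2 + INR n * x.
Proof. induction n. rewrite Sh_0; simpl; ring.
  rewrite Sh_S, IHn. rewrite (Sh_ext _ _ (fun k => INR k ^ 2 + (2 * INR k + 1))).
  2:{ intros. rewrite S_INR. ring. }
  rewrite Sh_plus, IHn, Sh_plus, Sh_scal, mom1, mom0, S_INR. ring. Qed.

Lemma variance n x : (0 < n)%nat ->
  Sh n (fun k => (INR k / INR n - x) ^ 2) x = x * (1 - x) / INR n.
Proof.
  intros Hn. assert (0 < INR n) by (apply lt_0_INR; auto).
  rewrite (Sh_ext _ _ (fun k => / INR n ^ 2 * INR k ^ 2 + ((- 2 * x / INR n) * INR k + x ^ 2 * 1))).
  2:{ intros. field. lra. }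
  rewrite !Sh_plus, !Sh_scal, mom2, mom1, mom0. field. lra.
Qed.

Definition Bern (g : R -> R) (n : nat) (x : R) : R := Sh n (fun k => g (INR k / INR n)) x.

Lemma Bern_poly g n : Poly (Bern g n).
Proof.
  unfold Bern, Sh.
  assert (forall N, Poly (fun x => sum_f_R0 (fun k => g (INR k / INR n) * bb n k x) N)).
  { induction N.
    - simpl. apply Pscal, bb_poly.
    - apply Poly_ext with (fun x => sum_f_R0 (fun k => g (INR k / INR n) * bb n k x) N
                                  + g (INR (S N) / INR n) * bb n (S N) x).
      apply Pplus; auto. apply Pscal, bb_poly. intros; rewrite tech5; auto. }
  apply H.
Qed.

Lemma Bern_approx g : (forall z, 0 <= z <= 1 -> continuity_pt g z) ->
  forall eps, 0 < eps -> exists n, forall x, 0 <= x <= 1 -> Rabs (Bern g n x - g x) <= eps.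
Proof.
  intros Hg eps Heps.
  destruct (continuity_ab_maj (fun z => Rabs (g z)) 0 1 ltac:(lra)) as [zM [HM _]].
  { intros c Hc. apply (continuity_pt_comp g Rabs). apply Hg; auto. apply Rcontinuity_abs. }
  set (M := Rabs (g zM)) in *.
  destruct (Heine_cor2 Hg (mkposreal (eps/2) ltac:(lra))) as [delta Hd]. simpl in Hd.
  pose proof (cond_pos delta) as Hdp.
  set (C := 2 * M / (delta * delta)).
  assert (HC : 0 <= C). { unfold C. apply Rmult_le_pos. pose proof (Rabs_pos (g zM)). unfold M. lra.
    left. apply Rinv_0_lt_compat. nra. }
  destruct (INR_archimed (eps/2) C ltac:(lra)) as [n Hn].
  assert (Hn0 : (0 < n)%nat). { destruct n. simpl in Hn. lra. lia. }
  assert (HnR : 0 < INR n) by (apply lt_0_INR; auto).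
  exists n. intros x Hx.
  unfold Bern.
  replace (g x) with (Sh n (fun _ => g x) x) by (rewrite (Sh_ext _ _ (fun _ => g x * 1)) by (intros; ring);
     rewrite Sh_scal, mom0; ring).
  assert (Hpt : forall k, (k <= n)%nat -> Rabs (g (INR k / INR n) - g x) <= eps/2 + C * (INR k / INR n - x) ^ 2).
  { intros k Hk. assert (Hkn : 0 <= INR k / INR n <= 1).
    { split. apply Rmult_le_pos. apply pos_INR. left; apply Rinv_0_lt_compat; auto.
      apply div_le_l; auto. rewrite Rmult_1_l. apply le_INR; auto. }
    destruct (Rlt_or_le (Rabs (INR k / INR n - x)) delta).
    - left. pose proof (Hd _ _ Hkn Hx H). pose proof (pow2_ge_0 (INR k / INR n - x)). nra.
    - assert (delta * delta <= (INR k / INR n - x) ^ 2).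
      { rewrite <- pow2_abs. pose proof (Rabs_pos (INR k / INR n - x)). nra. }
      assert (C * (delta * delta) = 2 * M) by (unfold C; field; lra).
      assert (C * (delta * delta) <= C * (INR k / INR n - x) ^ 2) by (apply Rmult_le_compat_l; auto).
      pose proof (HM _ Hkn). pose proof (HM _ Hx).
      pose proof (Rabs_triang (g (INR k / INR n)) (- g x)). rewrite Rabs_Ropp in H5.
      unfold Rminus. lra. }
  match goal with |- Rabs (?A - ?B) <= _ => replace (A - B) with (A + (-1) * B) by ring end.
  rewrite <- Sh_scal, <- Sh_plus.
  eapply Rle_trans. apply sum_f_R0_triangle.
  apply Rle_trans with (Sh n (fun k => eps/2 * 1 + C * (INR k / INR n - x) ^ 2) x).
  { unfold Sh. apply sum_Rle. intros k Hk. rewrite Rabs_mult, (Rabs_pos_eq (bb n k x)) by (apply bb_nonneg; auto).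
    apply Rmult_le_compat_r. apply bb_nonneg; auto.
    replace (g (INR k / INR n) + -1 * g x) with (g (INR k / INR n) - g x) by ring.
    rewrite Rmult_1_r. apply Hpt; auto. }
  rewrite Sh_plus, !Sh_scal, mom0, variance by auto.
  assert (x * (1 - x) <= 1) by nra.
  assert (C * (x * (1 - x) / INR n) <= C / INR n).
  { unfold Rdiv. rewrite <- Rmult_assoc. apply Rmult_le_compat_r. left; apply Rinv_0_lt_compat; auto.
    pose proof (Rmult_le_compat_l C _ _ HC H). lra. }
  assert (C / INR n < eps / 2) by (apply div_lt_l; auto; lra).
  lra.
Qed.

Lemma Poly_cont p : Poly p -> forall x, continuous p x.
Proof. induction 1; intros x; cont; auto. Qed.

Lemma sinsin_01 a t : 0 <= a <= PI/2 -> 0 <= t <= 1 -> 0 <= sin a * sin (PI*t) <= 1.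
Proof. intros Ha Ht. pose proof PI_RGT_0. split.
  apply Rmult_le_pos; apply sin_ge_0; nra.
  apply sinsin_range. Qed.

Lemma Eo_minus g h : Cg g -> Cg h -> Eo (fun z => g z - h z) = Eo g - Eo h.
Proof.
  intros Hg Hh. unfold Eo. rewrite <- RInt_minus_R by (apply ex_Eo; auto).
  apply (RInt_ext (V:=R_CompleteNormedModule)). intros x _. unfold Ein.
  rewrite RInt_minus_R by (apply ex_Ein; auto). lra.
Qed.

Lemma Eo_bound h eps : Cg h -> (forall z, 0 <= z <= 1 -> Rabs (h z) <= eps) -> Rabs (Eo h) <= eps.
Proof.
  intros Hh Hb. pose proof PI_RGT_0.
  assert (Hin : forall a, 0 <= a <= PI/2 -> Rabs (Ein h a) <= eps).
  { intros a Ha. unfold Ein. replace eps with ((1 - 0) * eps) by ring.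
    apply abs_RInt_le_const. lra. apply ex_Ein; auto.
    intros t Ht. apply Hb. apply sinsin_01; auto. }
  unfold Eo. eapply Rle_trans. apply abs_RInt_le. lra. apply ex_Eo; auto.
  apply Rle_trans with (RInt (fun a => eps * sin a ^ 1) 0 (PI/2)).
  apply RInt_le. lra.
  apply (ex_RInt_norm (fun a => sin a * Ein h a)). apply ex_Eo; auto.
  apply ex_RInt_cont. intros; cont.
  intros a Ha. rewrite Rabs_mult, Rabs_pos_eq by (apply sin_ge_0; lra).
  rewrite pow_1, Rmult_comm. apply Rmult_le_compat_r. apply sin_ge_0; lra. apply Hin; lra.
  rewrite RInt_scal_R. fold (Bw 1). rewrite Bw1. lra.
  apply ex_RInt_cont. intros; cont.
Qed.

Lemma Cg_minus g h : Cg g -> Cg h -> Cg (fun z => g z - h z).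
Proof. intros Hg Hh z Hz. apply (continuous_minus g h); auto. Qed.

Lemma Agree_all g : Cg g -> Eo g = RInt g 0 1.
Proof.
  intros Hg.
  assert (forall eps, 0 < eps -> Rabs (Eo g - RInt g 0 1) <= 2 * eps).
  { intros eps Heps.
    destruct (Bern_approx g) with eps as [n Hn]; auto.
    { intros z Hz. apply continuity_pt_filterlim. apply Hg. lra. }
    set (p := Bern g n).
    assert (Hp : Agree p) by (apply Poly_agree, Bern_poly).
    destruct Hp as [Cp Ep].
    assert (Hd : Cg (fun z => g z - p z)) by (apply Cg_minus; auto).
    assert (H1 : Rabs (Eo (fun z => g z - p z)) <= eps).
    { apply Eo_bound; auto. intros z Hz. rewrite Rabs_minus_sym. apply Hn; auto. }
    assert (H2 : Rabs (RInt (fun z => g z - p z) 0 1) <= eps).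
    { replace eps with ((1-0)*eps) by ring. apply abs_RInt_le_const. lra.
      apply ex01; auto. intros z Hz. rewrite Rabs_minus_sym. apply Hn; auto. }
    rewrite Eo_minus in H1 by auto. rewrite RInt_minus_R in H2 by (apply ex01; auto).
    rewrite Ep in H1.
    replace (Eo g - RInt g 0 1) with ((Eo g - RInt p 0 1) - (RInt g 0 1 - RInt p 0 1)) by ring.
    eapply Rle_trans. apply Rabs_triang. rewrite Rabs_Ropp. lra. }
  destruct (Req_dec (Eo g - RInt g 0 1) 0). lra.
  exfalso. set (d := Rabs (Eo g - RInt g 0 1)).
  assert (0 < d) by (apply Rabs_pos_lt; auto).
  specialize (H (d/4) ltac:(lra)). fold d in H. lra.
Qed.

Lemma cos_period_Z x m : cos (x + 2 * IZR m * PI) = cos x.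
Proof.
  destruct m as [|p|p].
  - simpl. f_equal. ring.
  - replace (IZR (Z.pos p)) with (INR (Pos.to_nat p)).
    apply cos_period. rewrite INR_IZR_INZ. f_equal. apply positive_nat_Z.
  - replace (IZR (Z.neg p)) with (- INR (Pos.to_nat p)).
    replace x with ((x + 2 * - INR (Pos.to_nat p) * PI) + 2 * INR (Pos.to_nat p) * PI) at 2 by ring.
    rewrite cos_period. auto.
    rewrite INR_IZR_INZ, positive_nat_Z. rewrite <- Pos2Z.opp_pos, opp_IZR. auto.
Qed.

Lemma cos_odd k : Z.Odd k -> cos (IZR k * PI) = -1.
Proof. intros [m ->]. rewrite plus_IZR, mult_IZR.
  replace ((IZR 2 * IZR m + IZR 1) * PI) with (PI + 2 * IZR m * PI) by (simpl; ring).
  rewrite cos_period_Z. apply cos_PI. Qed.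

Lemma powerRZ_even m : powerRZ (-1) (2 * m) = 1.
Proof. replace (2*m)%Z with (m+m)%Z by ring. rewrite powerRZ_add by lra.
  rewrite <- powerRZ_mult. replace (-1 * -1) with 1 by ring. apply powerRZ_R1. Qed.

Lemma powerRZ_odd k : Z.Odd k -> powerRZ (-1) k = -1.
Proof. intros [m ->]. rewrite powerRZ_add by lra. rewrite powerRZ_even. simpl. ring. Qed.

Lemma IZR_even_ge2 k : Z.Even k -> k <> 0%Z -> 2 <= Rabs (IZR k).
Proof. intros [m ->] Hk. rewrite mult_IZR, Rabs_mult, Rabs_pos_eq by (simpl; lra).
  assert (m <> 0%Z) by lia.
  assert (1 <= Rabs (IZR m)).
  { rewrite <- abs_IZR. apply IZR_le. lia. }
  simpl. lra. Qed.

Lemma cont_abs x : continuous Rabs x.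
Proof. apply continuity_pt_filterlim. apply Rcontinuity_abs. Qed.
Lemma cont_phi0 x : continuous phi0 x.
Proof. apply cont_of_der. eexists. apply is_derive_phi0. Qed.
Lemma cont_th x : continuous th x.
Proof. apply cont_of_der. eexists. apply is_derive_th. Qed.

Lemma Rmax_formula a b : Rmax a b = (a + b + Rabs (a - b)) / 2.
Proof. unfold Rmax. destruct (Rle_dec a b).
  rewrite Rabs_left1 by lra. field. rewrite Rabs_pos_eq by lra. field. Qed.

Ltac cont2 :=
  repeat (cont; try match goal with
  | |- continuous (fun t => Rabs (@?a t)) _ => apply (continuous_comp a Rabs); [|apply cont_abs]
  | |- continuous (fun t => phi0 (@?a t)) _ => apply (continuous_comp a phi0); [|apply cont_phi0]
  | |- continuous (fun t => th (@?a t)) _ => apply (continuous_comp a th); [|apply cont_th]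
  | |- continuous (fun t => Rmax (@?a t) (@?b t)) _ =>
      apply (continuous_ext (fun t => (a t + b t + Rabs (a t - b t)) / 2)); [intros; symmetry; apply Rmax_formula|]
  | |- continuous phi0 _ => apply cont_phi0
  | |- continuous th _ => apply cont_th
  end).

Lemma phi_cont2 (phi : R -> R -> R) : smooth2 phi ->
  forall (u v : R -> R) t, continuous u t -> continuous v t -> continuous (fun s => phi (u s) (v s)) t.
Proof. intros Hs u v t Hu Hv. apply (continuous_comp_2 u v phi); auto.
  exact (Hs 0%nat (u t) (v t)). Qed.

Lemma sqrt_ge_abs a b : Rabs a <= sqrt (a ^ 2 + b ^ 2).
Proof. rewrite <- (sqrt_pow2 (Rabs a)) by apply Rabs_pos. apply sqrt_le_1_alt.
  rewrite (pow2_abs a). pose proof (pow2_ge_0 b). lra. Qed.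

Lemma cs3 v1 v2 v3 w1 w2 w3 :
  (v1*w1+v2*w2+v3*w3)^2 <= (v1^2+v2^2+v3^2)*(w1^2+w2^2+w3^2).
Proof.
  pose proof (pow2_ge_0 (v1*w2 - v2*w1)). pose proof (pow2_ge_0 (v1*w3 - v3*w1)).
  pose proof (pow2_ge_0 (v2*w3 - v3*w2)). nra.
Qed.

Lemma vec_ineq p1 p2 p3 q1 q2 q3 v1 v2 v3 :
  p1^2+p2^2+p3^2 = 1 -> q1^2+q2^2+q3^2 = 1 -> v1*p1+v2*p2+v3*p3 = 0 ->
  (v1*q1+v2*q2+v3*q3)^2 <= (v1^2+v2^2+v3^2) * (1 - (p1*q1+p2*q2+p3*q3)^2).
Proof.
  intros Hp Hq Hv. set (s := p1*q1+p2*q2+p3*q3).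
  pose proof (cs3 v1 v2 v3 (q1 - s*p1) (q2 - s*p2) (q3 - s*p3)) as H.
  replace (v1 * (q1 - s * p1) + v2 * (q2 - s * p2) + v3 * (q3 - s * p3))
    with ((v1*q1+v2*q2+v3*q3) - s * (v1*p1+v2*p2+v3*p3)) in H by ring.
  replace ((q1 - s * p1) ^ 2 + (q2 - s * p2) ^ 2 + (q3 - s * p3) ^ 2)
    with ((q1^2+q2^2+q3^2) - 2 * s * (p1*q1+p2*q2+p3*q3) + s^2 * (p1^2+p2^2+p3^2)) in H by ring.
  rewrite Hv, Hq, Hp in H. fold s in H. replace (1 - 2 * s * s + s^2 * 1) with (1 - s^2) in H by ring.
  rewrite Rmult_0_r, Rminus_0_r in H. exact H.
Qed.

Lemma is_derive_asin u : -1 < u < 1 -> is_derive asin u (/ sqrt (1 - u^2)).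
Proof.
  intros Hu. apply is_derive_Reals.
  apply (derive_pt_eq_1 asin u _ (derivable_pt_asin u Hu)).
  rewrite derive_pt_asin. unfold Rsqr. rewrite Rdiv_1_l. f_equal. f_equal. ring.
Qed.

Lemma sq_le_abs x y : 0 <= y -> x ^ 2 <= y ^ 2 -> Rabs x <= y.
Proof. intros Hy H. rewrite <- (Rabs_pos_eq y Hy). exact (Rsqr_le_abs_0 x y ltac:(unfold Rsqr; replace (x*x) with (x^2) by ring; replace (y*y) with (y^2) by ring; exact H)). Qed.

Lemma calib (g1 g2 : R -> R) (d : R) : 0 < d ->
  (forall t, 0 <= t <= 1 -> ex_derive g1 t /\ ex_derive g2 t) ->
  (forall t, 0 <= t <= 1 -> continuous (Derive g1) t /\ continuous (Derive g2) t) ->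
  cos (g1 1 - g1 0) = -1 -> phi0 (g2 1) = phi0 (g2 0) -> th (g2 1) = - th (g2 0) ->
  2 * asin (1 / (1 + d)) <=
    RInt (fun t => phi0 (g2 t) * sqrt (Derive g1 t ^ 2 + Derive g2 t ^ 2)) 0 1.
Proof.
  intros Hd0 Hd Hc Ecos Ephi Eth.
  set (x0 := g1 0). set (y0 := g2 0).
  set (S := fun t => phi0 (g2 t) * phi0 y0 * cos (g1 t - x0) + th (g2 t) * th y0).
  set (Sd := fun t => (-(phi0 (g2 t) * th (g2 t)) * Derive g2 t) * phi0 y0 * cos (g1 t - x0)
            + phi0 (g2 t) * phi0 y0 * (- sin (g1 t - x0) * Derive g1 t)
            + (phi0 (g2 t) ^ 2 * Derive g2 t) * th y0).
  assert (HSd : forall t, 0 <= t <= 1 -> is_derive S t (Sd t)).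
  { intros t Ht. destruct (Hd t Ht) as [H1 H2]. unfold S, Sd.
    evar_last. auto_derive. repeat split; auto; eexists; first [apply is_derive_phi0 | apply is_derive_th].
    reflexivity.
    replace (Derive (fun x => phi0 x) (g2 t)) with (-(phi0 (g2 t) * th (g2 t)))
      by (symmetry; apply is_derive_unique; apply is_derive_phi0).
    replace (Derive (fun x => th x) (g2 t)) with (phi0 (g2 t) ^ 2)
      by (symmetry; apply is_derive_unique; apply is_derive_th).
    change (Derive (fun x => g2 x)) with (Derive g2).
    change (Derive (fun x => g1 x)) with (Derive g1). unfold Rminus. ring. }
  assert (HSb : forall t, S t ^ 2 <= 1).
  { intros t. unfold S. pose proof (phi0_th (g2 t)). pose proof (phi0_th y0).
    pose proof (sin2_cos2 (g1 t - x0)). unfold Rsqr in H1.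
    pose proof (cs3 (phi0 (g2 t) * cos (g1 t - x0)) (phi0 (g2 t) * sin (g1 t - x0)) (th (g2 t))
                    (phi0 y0) 0 (th y0)).
    replace (phi0 (g2 t) * phi0 y0 * cos (g1 t - x0) + th (g2 t) * th y0) with
      (phi0 (g2 t) * cos (g1 t - x0) * phi0 y0 + phi0 (g2 t) * sin (g1 t - x0) * 0 + th (g2 t) * th y0) by ring.
    eapply Rle_trans. apply H2.
    replace ((phi0 (g2 t) * cos (g1 t - x0)) ^ 2 + (phi0 (g2 t) * sin (g1 t - x0)) ^ 2 + th (g2 t) ^ 2)
      with (phi0 (g2 t) ^ 2 * (sin (g1 t - x0) * sin (g1 t - x0) + cos (g1 t - x0) * cos (g1 t - x0)) + th (g2 t) ^ 2) by ring.
    rewrite H1. replace (phi0 y0 ^ 2 + 0 ^ 2 + th y0 ^ 2) with 1 by lra. lra. }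
  set (u := fun t => S t / (1 + d)).
  assert (Hu : forall t, -1 < u t < 1).
  { intros t. unfold u. pose proof (HSb t).
    assert (Rabs (S t) <= 1). { apply sq_le_abs. lra. lra. }
    apply Rabs_le_between in H0. split.
    apply div_gt_l; lra. apply div_lt_l; lra. }
  set (A := fun t => sqrt (1 - u t ^ 2)).
  assert (HA : forall t, 0 < A t).
  { intros t. unfold A. apply sqrt_lt_R0. pose proof (Hu t). nra. }
  set (wd := fun t => Sd t / (1 + d) * / A t).
  assert (Hw : forall t, 0 <= t <= 1 -> is_derive (fun s => asin (u s)) t (wd t)).
  { intros t Ht. unfold wd.
    assert (Hud : is_derive u t (Sd t / (1+d))).
    { apply (is_derive_ext (fun s => scal (/(1+d)) (S s))).
      intros; unfold u, scal; simpl; unfold mult; simpl; unfold Rdiv; lra.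
      evar_last. apply is_derive_scal. apply HSd; auto. unfold scal; simpl; unfold mult; simpl. unfold Rdiv; lra. }
    evar_last. apply (is_derive_comp asin u). apply is_derive_asin. apply Hu. apply Hud.
    unfold scal; simpl; unfold mult; simpl. unfold A. repeat f_equal. }
  assert (Hwc : forall t, 0 <= t <= 1 -> continuous wd t).
  { intros t Ht. destruct (Hd t Ht) as [H1 H2]. destruct (Hc t Ht) as [H3 H4].
    apply ex_derive_continuous in H1. apply ex_derive_continuous in H2.
    unfold wd, Sd, A, u, S. cont2; auto; try lra.
    pose proof (HA t) as HAt. unfold A, u, S in HAt. lra. }
  assert (Hineq : forall t, 0 <= t <= 1 ->
    - wd t <= phi0 (g2 t) * sqrt (Derive g1 t ^ 2 + Derive g2 t ^ 2)).
  { intros t Ht.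
    set (a := Derive g1 t). set (b := Derive g2 t). set (P := phi0 (g2 t)). set (Q := th (g2 t)).
    set (c := cos (g1 t - x0)). set (s := sin (g1 t - x0)).
    set (N := sqrt (a ^ 2 + b ^ 2)).
    assert (HPQ : P ^ 2 + Q ^ 2 = 1) by apply phi0_th.
    assert (H0 : phi0 y0 ^ 2 + th y0 ^ 2 = 1) by apply phi0_th.
    assert (Hsc : s * s + c * c = 1) by (pose proof (sin2_cos2 (g1 t - x0)); unfold Rsqr in H; auto).
    assert (HN : N ^ 2 = a ^ 2 + b ^ 2). { unfold N. rewrite pow2_sqrt. auto. nra. }
    assert (HNp : 0 <= N) by apply sqrt_pos.
    assert (HPp : 0 < P) by apply phi0_pos.
    pose proof (vec_ineq (P * c) (P * s) Q (phi0 y0) 0 (th y0)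
        (- P * Q * b * c - P * s * a) (- P * Q * b * s + P * c * a) (P ^ 2 * b)) as V.
    assert (E1 : (P * c) ^ 2 + (P * s) ^ 2 + Q ^ 2 = 1).
    { replace ((P * c) ^ 2 + (P * s) ^ 2 + Q ^ 2) with (P^2 * (s*s+c*c) + Q^2) by ring. rewrite Hsc. lra. }
    assert (E2 : phi0 y0 ^ 2 + 0 ^ 2 + th y0 ^ 2 = 1) by lra.
    assert (E3 : (- P * Q * b * c - P * s * a) * (P * c) + (- P * Q * b * s + P * c * a) * (P * s) + P ^ 2 * b * Q = 0).
    { replace ((- P * Q * b * c - P * s * a) * (P * c) + (- P * Q * b * s + P * c * a) * (P * s) + P ^ 2 * b * Q)
        with (P^2 * Q * b * (1 - (s*s + c*c))) by ring. rewrite Hsc. ring. }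
    specialize (V E1 E2 E3).
    assert (E4 : (- P * Q * b * c - P * s * a) * phi0 y0 + (- P * Q * b * s + P * c * a) * 0 + P ^ 2 * b * th y0 = Sd t).
    { unfold Sd. fold a b P Q c s. ring. }
    assert (E5 : P * c * phi0 y0 + P * s * 0 + Q * th y0 = S t).
    { unfold S. fold P Q c. ring. }
    assert (E6 : (- P * Q * b * c - P * s * a) ^ 2 + (- P * Q * b * s + P * c * a) ^ 2 + (P ^ 2 * b) ^ 2
                 = P ^ 2 * (a ^ 2 + b ^ 2)).
    { replace ((- P * Q * b * c - P * s * a) ^ 2 + (- P * Q * b * s + P * c * a) ^ 2 + (P ^ 2 * b) ^ 2)
        with (P^2 * Q^2 * b^2 * (s*s+c*c) + P^2 * a^2 * (s*s+c*c) + P^4 * b^2) by ring.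
      rewrite Hsc. replace (Q^2) with (1 - P^2) by lra. ring. }
    rewrite E4, E5, E6 in V.
    (* now V : Sd t ^2 <= P^2 (a^2+b^2) (1 - S t ^2) *)
    assert (HA2 : A t ^ 2 = 1 - u t ^ 2). { unfold A. rewrite pow2_sqrt. auto. pose proof (Hu t). nra. }
    assert (Hut : u t * (1 + d) = S t). { unfold u. field. lra. }
    assert (Hkey : Rabs (Sd t) <= P * N * ((1 + d) * A t)).
    { apply sq_le_abs. pose proof (HA t). apply Rmult_le_pos. nra. nra.
      replace ((P * N * ((1 + d) * A t)) ^ 2) with (P^2 * N^2 * ((1+d)^2 * A t ^2)) by ring.
      rewrite HA2, HN.
      replace ((1 + d) ^ 2 * (1 - u t ^ 2)) with ((1+d)^2 - (u t * (1 + d))^2) by ring.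
      rewrite Hut. pose proof (pow2_ge_0 (P)). pose proof (pow2_ge_0 a). pose proof (pow2_ge_0 b).
      assert (1 <= (1 + d)^2) by nra.
      assert (0 <= P^2 * (a^2+b^2)) by nra.
      nra. }
    unfold wd. pose proof (HA t).
    apply Rle_trans with (Rabs (Sd t) / ((1 + d) * A t)).
    - replace (Sd t / (1 + d) * / A t) with (Sd t / ((1 + d) * A t)) by (field; lra).
      rewrite <- Ropp_div. unfold Rdiv. apply Rmult_le_compat_r.
      left. apply Rinv_0_lt_compat. nra. rewrite <- Rabs_Ropp. apply Rle_abs.
    - apply div_le_l. nra. lra. }
  assert (HI : RInt wd 0 1 = asin (u 1) - asin (u 0)).
  { apply (RInt_derive_R (fun s => asin (u s))). intros x Hx. rewrite Rmin_left, Rmax_right in Hx by lra. auto.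
    intros x Hx. rewrite Rmin_left, Rmax_right in Hx by lra. auto. }
  assert (HS0 : S 0 = 1).
  { unfold S. fold y0 x0. rewrite Rminus_diag, cos_0. pose proof (phi0_th y0). lra. }
  assert (HS1 : S 1 = -1).
  { unfold S, x0, y0. rewrite Ecos, Ephi, Eth. fold y0. pose proof (phi0_th y0). lra. }
  unfold u in HI. rewrite HS0, HS1 in HI.
  replace (-1 / (1 + d)) with (- (1 / (1 + d))) in HI by (field; lra).
  rewrite asin_opp in HI.
  apply Rle_trans with (RInt (fun t => - wd t) 0 1).
  - rewrite (RInt_ext (V:=R_CompleteNormedModule) _ (fun t => (-1) * wd t)) by (intros; lra).
    rewrite RInt_scal_R, HI. lra.
    apply ex_RInt_cont'. lra. auto.
  - apply RInt_le. lra.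
    apply ex_RInt_cont'. lra. intros. apply (continuous_opp wd). auto.
    apply ex_RInt_cont'. lra. intros t Ht. destruct (Hd t Ht) as [H1 H2]. destruct (Hc t Ht) as [H3 H4].
    apply ex_derive_continuous in H2. cont2; auto.
    intros t Ht. apply Hineq. lra.
Qed.

Lemma lower_bound beta g1 g2 : noncontractible_loop_lift beta g1 g2 -> PI <= curve_length phib g1 g2.
Proof.
  intros [[Hd [Hc Hs]] [k [Hk0 Heq]]].
  unfold Apow in Heq; simpl in Heq. injection Heq as E1 E2.
  pose proof PI_RGT_0 as HPI.
  set (h := fun t => phib (g1 t) (g2 t) * sqrt (Derive g1 t ^ 2 + Derive g2 t ^ 2)).
  assert (Hhc : forall t, 0 <= t <= 1 -> continuous h t).
  { intros t Ht. destruct (Hd t Ht) as [H1 H2]. destruct (Hc t Ht) as [H3 H4].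
    apply ex_derive_continuous in H2. unfold h, phib. cont2; auto. }
  unfold curve_length. fold h.
  destruct (Z.Even_or_Odd k) as [Hev | Hod].
  -
    assert (HD : RInt (Derive g1) 0 1 = g1 1 - g1 0).
    { apply RInt_derive_R; rewrite Rmin_left, Rmax_right by lra; intros x Hx.
      apply Derive_correct, (proj1 (Hd x Hx)). apply (proj1 (Hc x Hx)). }
    assert (Hex1 : ex_RInt (Derive g1) 0 1) by (apply ex_RInt_cont'; [lra| intros x Hx; apply (proj1 (Hc x Hx))]).
    apply Rle_trans with (RInt (fun t => /2 * Rabs (Derive g1 t)) 0 1).
    + rewrite RInt_scal_R.
      2:{ apply (ex_RInt_norm (Derive g1)). auto. }
      apply Rle_trans with (/2 * Rabs (RInt (Derive g1) 0 1)).
      * rewrite HD, E1. replace (g1 0 + IZR k * PI - g1 0) with (IZR k * PI) by ring.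
        rewrite Rabs_mult, (Rabs_pos_eq PI) by lra. pose proof (IZR_even_ge2 k Hev Hk0). nra.
      * apply Rmult_le_compat_l. lra. apply abs_RInt_le. lra. auto.
    + apply RInt_le. lra.
      apply ex_RInt_cont'. lra. intros t Ht. destruct (Hc t Ht). cont2; auto.
      apply ex_RInt_cont'. lra. auto.
      intros t Ht. unfold h, phib. 
      pose proof (sqrt_ge_abs (Derive g1 t) (Derive g2 t)). pose proof (Rmax_r (phi0 (g2 t)) (1/2)).
      pose proof (Rabs_pos (Derive g1 t)). nra.
  -
    assert (Ecos : cos (g1 1 - g1 0) = -1).
    { rewrite E1. replace (g1 0 + IZR k * PI - g1 0) with (IZR k * PI) by ring. apply cos_odd; auto. }
    rewrite powerRZ_odd in E2 by auto.
    assert (Ephi : phi0 (g2 1) = phi0 (g2 0)). { rewrite E2. replace (-1 * g2 0) with (- g2 0) by ring. apply phi0_even. }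
    assert (Eth : th (g2 1) = - th (g2 0)). { rewrite E2. replace (-1 * g2 0) with (- g2 0) by ring. apply th_odd. }
    assert (Hcal : forall d, 0 < d -> 2 * asin (1 / (1 + d)) <= RInt h 0 1).
    { intros d Hdd. eapply Rle_trans. apply (calib g1 g2 d); auto.
      apply RInt_le. lra.
      apply ex_RInt_cont'. lra. intros t Ht. destruct (Hd t Ht) as [H1 H2]. destruct (Hc t Ht).
      apply ex_derive_continuous in H2. cont2; auto.
      apply ex_RInt_cont'. lra. auto.
      intros t Ht. unfold h, phib. apply Rmult_le_compat_r. apply sqrt_pos. apply Rmax_l. }
    destruct (Rle_or_lt PI (RInt h 0 1)) as [Hle|Hlt]; auto.
    exfalso.
    set (L := RInt h 0 1) in *.
    set (u := (Rmax L 0 / 2 + PI / 2) / 2).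
    assert (Hu1 : 0 < u) by (unfold u; pose proof (Rmax_r L 0); lra).
    assert (Hu2 : u < PI / 2) by (unfold u; pose proof (Rmax_r L 0); destruct (Rle_dec L 0);
      [rewrite Rmax_right by lra; lra| rewrite Rmax_left by lra; lra]).
    assert (Hu3 : L < 2 * u) by (unfold u; pose proof (Rmax_l L 0); lra).
    assert (Hs1 : 0 < sin u) by (apply sin_gt_0; lra).
    assert (Hs2 : sin u < 1).
    { rewrite <- sin_PI2. apply sin_increasing_1; lra. }
    specialize (Hcal (1 / sin u - 1) ltac:(apply Rlt_Rminus; apply div_gt_l; lra)).
    replace (1 / (1 + (1 / sin u - 1))) with (sin u) in Hcal by (field; lra).
    rewrite asin_sin in Hcal by lra. fold L in Hcal. lra.
Qed.

Lemma len_ex beta g1 g2 : noncontractible_loop_lift beta g1 g2 ->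
  ex_RInt (fun t => phib (g1 t) (g2 t) * sqrt (Derive g1 t ^ 2 + Derive g2 t ^ 2)) 0 1.
Proof.
  intros [[Hd [Hc Hs]] _]. apply ex_RInt_cont'. lra.
  intros t Ht. destruct (Hd t Ht) as [H1 H2]. destruct (Hc t Ht) as [H3 H4].
  apply ex_derive_continuous in H2. unfold phib. cont2; auto.
Qed.

Definition gx (q t : R) : R :=
  PI * t + atan ((sqrt (1 - q^2) - 1) * sin (PI*t) * cos (PI*t) / (cos (PI*t) ^ 2 + sqrt (1 - q^2) * sin (PI*t) ^ 2)).
Definition gy (q t : R) : R := ln ((1 + q * sin (PI*t)) / (1 - q * sin (PI*t))) / 2.
Definition Dq (q t : R) : R := 1 - q^2 * sin (PI*t) ^ 2.

Lemma Dq_pos q t : 0 <= q < 1 -> 0 < Dq q t.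
Proof. intros Hq. unfold Dq. pose proof (SIN_bound (PI*t)).
  assert (sin (PI*t) ^ 2 <= 1) by (simpl; nra). assert (q^2 < 1) by (simpl; nra). nra. Qed.

Lemma gx_der q t : 0 <= q < 1 -> is_derive (gx q) t (PI * sqrt (1 - q^2) / Dq q t).
Proof.
  intros Hq. pose proof PI_RGT_0.
  set (k := sqrt (1 - q^2)).
  assert (Hk : k ^ 2 = 1 - q^2) by (unfold k; rewrite pow2_sqrt; simpl; nra).
  assert (Hk0 : 0 < k) by (unfold k; apply sqrt_lt_R0; simpl; nra).
  pose proof (sin2_cos2 (PI*t)) as Hsc. unfold Rsqr in Hsc.
  assert (HM : 0 < cos (PI*t) ^ 2 + k * sin (PI*t) ^ 2).
  { destruct (Req_dec (sin (PI*t)) 0). rewrite H0 in *. simpl. nra.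
    pose proof (pow2_ge_0 (cos (PI*t))). assert (0 < sin (PI*t)^2) by (simpl; nra). nra. }
  unfold gx. fold k.
  evar_last. auto_derive. lra. reflexivity.
  set (s := sin (PI*t)) in *. set (c := cos (PI*t)) in *.
  unfold Dq. fold s.
  assert (HN : 0 < c * c + k^2 * s * s).
  { rewrite Hk. assert (q^2 < 1) by (simpl; nra). assert (s*s <= 1) by nra. nra. }
  match goal with |- ?L = _ => transitivity (PI * k * (c*c + s*s) / (c*c + k^2*s*s)) end.
  field. split. lra. split. simpl in HM. lra.
  pose proof (pow2_ge_0 ((k - 1) * s * c)). simpl in HM. simpl in H0. nra.
  rewrite Rplus_comm in Hsc. rewrite Hsc, Hk. replace (c*c) with (1 - s*s) by lra. field. assert (q^2*s^2 <= q^2*1) by (apply Rmult_le_compat_l; simpl; nra). simpl in *. nra.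
Qed.

Lemma gy_der q t : 0 <= q < 1 -> is_derive (gy q) t (PI * q * cos (PI*t) / Dq q t).
Proof.
  intros Hq. pose proof (SIN_bound (PI*t)). pose proof (Dq_pos q t Hq) as HD.
  assert (q * sin (PI*t) < 1) by nra. assert (-1 < q * sin (PI*t)) by nra.
  unfold gy. evar_last. auto_derive. repeat split; try lra.
  apply Rdiv_lt_0_compat; lra. reflexivity.
  unfold Dq in *. field. split. nra. lra.
Qed.

Definition ath (u : R) : R := ln ((1 + u) / (1 - u)) / 2.

Lemma ath_th y : ath (th y) = y.
Proof. unfold ath. rewrite th_alt. pose proof (exp_pos y).
  replace ((1 + (exp y * exp y - 1) / (exp y * exp y + 1)) / (1 - (exp y * exp y - 1) / (exp y * exp y + 1)))
    with (exp (2*y)) by (rewrite exp2; field; nra).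
  rewrite ln_exp. field. Qed.

Lemma th_pos b : 0 < b -> 0 < th b.
Proof. intros. unfold th. assert (1 < exp (2*b)) by (rewrite <- exp_0; apply exp_increasing; lra).
  apply Rdiv_lt_0_compat; lra. Qed.

Lemma ath_bound b u : 0 <= b -> Rabs u <= th b -> Rabs (ath u) <= b.
Proof.
  intros Hb Hu. pose proof (th_bound b). apply Rabs_le_between in Hu.
  unfold th in *. set (E := exp (2*b)) in *.
  assert (HE : 1 <= E) by (unfold E; pose proof (exp_ineq1_le (2*b)); lra).
  assert (Hu1 : u < 1) by lra. assert (Hu2 : -1 < u) by lra.
  assert (Hup : (1 + u) / (1 - u) <= E).
  { apply div_le_l. lra. assert (u * (E + 1) <= E - 1).
    { destruct Hu as [_ Hu]. apply Rmult_le_compat_r with (r := E + 1) in Hu. 2: lra.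
      replace ((E - 1) / (E + 1) * (E + 1)) with (E - 1) in Hu by (field; lra). lra. }
    lra. }
  assert (Hlo : / E <= (1 + u) / (1 - u)).
  { apply div_ge_l. lra. assert (- (E - 1) <= u * (E + 1)).
    { destruct Hu as [Hu _]. apply Rmult_le_compat_r with (r := E + 1) in Hu. 2: lra.
      replace (- ((E - 1) / (E + 1)) * (E + 1)) with (- (E - 1)) in Hu by (field; lra). lra. }
    apply Rmult_le_reg_l with E. lra. rewrite <- Rmult_assoc, Rinv_r by lra. nra. }
  assert (Hpos : 0 < (1 + u) / (1 - u)) by (apply Rdiv_lt_0_compat; lra).
  unfold ath. apply Rabs_le. split.
  - assert (ln (/ E) <= ln ((1 + u) / (1 - u))).
    { destruct Hlo. left. apply ln_increasing. apply Rinv_0_lt_compat; lra. auto. rewrite H0. lra. }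
    rewrite ln_Rinv in H0 by lra. unfold E in H0. rewrite ln_exp in H0. lra.
  - assert (ln ((1 + u) / (1 - u)) <= ln E).
    { destruct Hup. left. apply ln_increasing. auto. auto. rewrite H0. lra. }
    unfold E in H0. rewrite ln_exp in H0. lra.
Qed.

Lemma Derive_gx q : 0 <= q < 1 -> Derive (gx q) = fun t => PI * sqrt (1 - q^2) / Dq q t.
Proof. intros. apply functional_extensionality. intros t. apply is_derive_unique. apply gx_der; auto. Qed.
Lemma Derive_gy q : 0 <= q < 1 -> Derive (gy q) = fun t => PI * q * cos (PI*t) / Dq q t.
Proof. intros. apply functional_extensionality. intros t. apply is_derive_unique. apply gy_der; auto. Qed.

Lemma gc_loop beta b q : 0 < b <= beta -> 0 <= q <= th b -> noncontractible_loop_lift beta (gx q) (gy q).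
Proof.
  intros Hb Hq. pose proof (th_bound b). assert (Hq1 : 0 <= q < 1) by lra.
  split. split; [|split].
  - intros t _. split; eexists; [apply gx_der|apply gy_der]; auto.
  - intros t _. rewrite Derive_gx, Derive_gy by auto. pose proof (Dq_pos q t Hq1).
    unfold Dq in *. split; cont; lra.
  - intros t _. apply Rabs_le_between. fold (ath (q * sin (PI*t))).
    apply Rle_trans with b. apply ath_bound. lra.
    rewrite Rabs_mult, Rabs_pos_eq by lra. pose proof (SIN_bound (PI*t)).
    assert (Rabs (sin (PI*t)) <= 1) by (apply Rabs_le; lra). nra. lra.
  - exists 1%Z. split. lia. unfold Apow, gx, gy. simpl.
    rewrite !Rmult_0_r, !Rmult_1_r, sin_0, sin_PI, !Rmult_0_r, !Rmult_0_l.
    replace ((1 + 0) / (1 - 0)) with 1 by field. rewrite ln_1. replace (0 / (cos PI * cos PI)) with 0 by (unfold Rdiv; ring). replace (0 / (cos 0 * cos 0 + 0)) with 0 by (unfold Rdiv; ring). rewrite atan_0.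
    replace (0 / (cos PI * cos PI + 0)) with 0 by (unfold Rdiv; ring). rewrite atan_0. f_equal; field.
Qed.

Definition Hyps (beta : R) (phi : R -> R -> R) : Prop :=
  0 < beta /\ smooth2 phi /\ (forall x y, -beta <= y <= beta -> 0 < phi x y) /\
  (forall x y, -beta <= y <= beta -> phi (x+PI) (-y) = phi x y) /\
  (forall h x y, -beta <= y <= beta -> phi (x + h) y = phi x y).

Ltac toR := match goal with |- ?a = ?b => change (@eq R a b) end.

Lemma phi_xind beta phi : Hyps beta phi -> forall x y, -beta <= y <= beta -> phi x y = phi 0 y.
Proof. intros (_&_&_&_&hH) x y Hy. rewrite <- (hH x 0 y Hy). f_equal. ring. Qed.

Lemma f_even beta phi : Hyps beta phi -> forall y, -beta <= y <= beta -> phi 0 (-y) = phi 0 y.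
Proof. intros H y Hy. pose proof H as (_&_&_&hA&_).
  rewrite <- (hA 0 y Hy). symmetry. apply (phi_xind beta phi H). lra. Qed.

Lemma f_cont beta phi : Hyps beta phi -> forall y, continuous (fun y => phi 0 y) y.
Proof. intros (_&Hs&_) y. apply (phi_cont2 phi Hs (fun _ => 0) (fun y => y)).
  apply continuous_const. apply continuous_id. Qed.

Definition Gt (phi : R -> R -> R) (u : R) : R := phi 0 (ath u) / sqrt (1 - u^2).

Lemma Gt_cont beta phi u : Hyps beta phi -> -1 < u < 1 -> continuous (Gt phi) u.
Proof. intros H Hu. unfold Gt, ath.
  apply (continuous_mult (fun u => phi 0 (ln ((1 + u) / (1 - u)) / 2)) (fun u => / sqrt (1 - u^2))).
  - apply (continuous_comp (fun u => ln ((1 + u) / (1 - u)) / 2) (fun y => phi 0 y)).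
    cont; try lra. apply Rdiv_lt_0_compat; lra. apply (f_cont beta phi H).
  - cont. assert (0 < sqrt (1 - u^2)) by (apply sqrt_lt_R0; simpl; nra). lra.
Qed.

Lemma gc_length beta phi b q : Hyps beta phi -> 0 < b <= beta -> 0 <= q <= th b ->
  curve_length phi (gx q) (gy q) = PI * RInt (fun t => Gt phi (q * sin (PI*t))) 0 1.
Proof.
  intros H Hb Hq. pose proof (th_bound b). assert (Hq1 : 0 <= q < 1) by lra.
  pose proof (gc_loop beta b q Hb Hq) as [[_ [_ Hstrip]] _].
  unfold curve_length. rewrite Derive_gx, Derive_gy by auto.
  rewrite <- RInt_scal_R.
  2:{ apply ex_RInt_cont'. lra. intros t Ht. apply (continuous_comp (fun t => q * sin (PI*t)) (Gt phi)).
      cont. apply (Gt_cont beta phi); auto. pose proof (SIN_bound (PI*t)). split; nra. }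
  apply (RInt_ext (V:=R_CompleteNormedModule)). intros t Ht.
  match goal with |- ?a = ?b => change (@eq R a b) end.
  rewrite Rmin_left, Rmax_right in Ht by lra.
  rewrite (phi_xind beta phi H) by (apply Hstrip; lra).
  pose proof PI_RGT_0. pose proof (Dq_pos q t Hq1) as HD.
  set (k := sqrt (1 - q^2)). assert (Hk : k ^ 2 = 1 - q^2) by (unfold k; rewrite pow2_sqrt; simpl; nra).
  pose proof (sin2_cos2 (PI*t)) as Hsc. unfold Rsqr in Hsc.
  assert (E : (PI * k / Dq q t) ^ 2 + (PI * q * cos (PI * t) / Dq q t) ^ 2 = (PI / sqrt (Dq q t)) ^ 2).
  { assert (Hs : 0 < sqrt (Dq q t)) by (apply sqrt_lt_R0; lra).
    replace ((PI / sqrt (Dq q t)) ^ 2) with (PI^2 / (sqrt (Dq q t) * sqrt (Dq q t))) by (field; lra).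
    rewrite sqrt_sqrt by lra.
    replace ((PI * k / Dq q t) ^ 2 + (PI * q * cos (PI * t) / Dq q t) ^ 2)
      with (PI^2 * (k^2 + q^2 * cos (PI*t)^2) / (Dq q t * Dq q t)) by (field; lra).
    rewrite Hk. replace (cos (PI*t) ^ 2) with (1 - sin (PI*t) ^ 2) by (simpl; lra).
    replace (1 - q ^ 2 + q ^ 2 * (1 - sin (PI * t) ^ 2)) with (Dq q t) by (unfold Dq; ring).
    field. lra. }
  rewrite E, sqrt_pow2.
  2:{ apply Rlt_le, Rdiv_lt_0_compat. lra. apply sqrt_lt_R0. lra. }
  unfold Gt. unfold gy. fold (ath (q * sin (PI*t))). unfold Dq.
  replace ((q * sin (PI * t)) ^ 2) with (q ^ 2 * sin (PI * t) ^ 2) by ring.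
  field. assert (0 < sqrt (1 - q ^ 2 * sin (PI * t) ^ 2)) by (apply sqrt_lt_R0; unfold Dq in HD; lra). lra.
Qed.

Lemma horiz beta phi y0 : Hyps beta phi -> -beta <= y0 <= beta ->
  noncontractible_loop_lift beta (fun t => 2 * PI * t) (fun _ => y0) /\
  curve_length phi (fun t => 2 * PI * t) (fun _ => y0) = 2 * PI * phi 0 y0.
Proof.
  intros H Hy. pose proof PI_RGT_0.
  assert (D1 : Derive (fun t => 2 * PI * t) = fun _ => 2 * PI).
  { apply functional_extensionality. intros. apply is_derive_unique. evar_last. auto_derive. auto. reflexivity. ring. }
  assert (D2 : Derive (fun _ : R => y0) = fun _ => 0).
  { apply functional_extensionality. intros. apply is_derive_unique. evar_last. auto_derive. auto. reflexivity. ring. }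
  split.
  - split. split; [|split].
    + intros; split; auto_derive; auto.
    + intros. rewrite D1, D2. split; apply continuous_const.
    + intros; auto.
    + exists 2%Z. split. lia. unfold Apow. simpl. f_equal; ring.
  - unfold curve_length. rewrite D1, D2.
    rewrite (RInt_ext (V:=R_CompleteNormedModule) _ (fun _ => 2 * PI * phi 0 y0)).
    rewrite RInt_const_R. toR. ring.
    intros t _. toR. rewrite (phi_xind beta phi H) by auto.
    replace ((2 * PI) ^ 2 + 0 ^ 2) with ((2 * PI) ^ 2) by ring. rewrite sqrt_pow2 by lra. ring.
Qed.

Definition beta1 : R := ln (2 + sqrt 3).

Lemma sqrt3 : sqrt 3 * sqrt 3 = 3 /\ 1 < sqrt 3.
Proof. split. apply sqrt_sqrt; lra. rewrite <- sqrt_1. apply sqrt_lt_1_alt. lra. Qed.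

Lemma beta1_pos : 0 < beta1.
Proof. unfold beta1. rewrite <- ln_1. apply ln_increasing. lra. pose proof sqrt3. lra. Qed.

Lemma exp_beta1 : exp beta1 = 2 + sqrt 3.
Proof. unfold beta1. apply exp_ln. pose proof sqrt3. lra. Qed.

Lemma phi0_ge_half y : 0 <= y <= beta1 -> 1/2 <= phi0 y.
Proof.
  intros Hy. rewrite phi0_alt. pose proof sqrt3 as [S1 S2].
  assert (1 <= exp y) by (pose proof (exp_ineq1_le y); lra).
  assert (exp y <= 2 + sqrt 3).
  { rewrite <- exp_beta1. destruct (Req_dec y beta1). subst; lra. left; apply exp_increasing; lra. }
  apply div_ge_l. nra. nra.
Qed.

Lemma phi0_le_half y : beta1 <= y -> phi0 y <= 1/2.
Proof.
  intros Hy. rewrite phi0_alt. pose proof sqrt3 as [S1 S2].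
  assert (2 + sqrt 3 <= exp y).
  { rewrite <- exp_beta1. destruct (Req_dec y beta1). subst; lra. left; apply exp_increasing; lra. }
  apply div_le_l. nra. nra.
Qed.

Lemma even_int (h : R -> R) beta : 0 < beta ->
  (forall y, -beta <= y <= beta -> continuous h y) ->
  (forall y, -beta <= y <= beta -> h (-y) = h y) ->
  RInt h (-beta) beta = 2 * RInt h 0 beta.
Proof.
  intros Hb Hc He.
  assert (ex1 : ex_RInt h (-beta) 0) by (apply ex_RInt_cont'; [lra| intros; apply Hc; lra]).
  assert (ex2 : ex_RInt h 0 beta) by (apply ex_RInt_cont'; [lra| intros; apply Hc; lra]).
  assert (C : RInt h (-beta) 0 + RInt h 0 beta = RInt h (-beta) beta) by exact (RInt_Chasles h _ _ _ ex1 ex2).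
  assert (ex3 : ex_RInt h (-1*0+0) (-1*beta+0)).
  { replace (-1*0+0) with 0 by ring. replace (-1*beta+0) with (-beta) by ring.
    apply (ex_RInt_swap h). auto. }
  pose proof (RInt_comp_lin h (-1) 0 0 beta ex3) as L.
  replace (-1*0+0) with 0 in L by ring. replace (-1*beta+0) with (-beta) in L by ring.
  assert (L2 : RInt h 0 (-beta) = - RInt h (-beta) 0) by (symmetry; exact (opp_RInt_swap h _ _ ex1)).
  match type of L with ?A = _ => assert (L3 : A = - RInt h 0 beta) end.
  { rewrite (RInt_ext (V:=R_CompleteNormedModule) _ (fun y => (-1) * h y)).
    rewrite RInt_scal_R by auto. toR. ring.
    intros y Hy. rewrite Rmin_left, Rmax_right in Hy by lra. toR.
    replace (-1*y+0) with (-y) by ring. rewrite He by lra. reflexivity. }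
  rewrite L3, L2 in L. lra.
Qed.

Lemma phib_cont y : continuous (fun y => phib 0 y) y.
Proof. unfold phib. cont2. Qed.

Lemma upper beta phi : Hyps beta phi -> forall r,
  (forall g1 g2, noncontractible_loop_lift beta g1 g2 -> r <= curve_length phi g1 g2) ->
  r * RInt (fun y => phib 0 y * phib 0 y) (-beta) beta <= PI * RInt (fun y => phi 0 y * phib 0 y) (-beta) beta.
Proof.
  intros H r Hcurve. pose proof H as (Hb & Hs & Hpos & hA & hH).
  pose proof PI_RGT_0 as HPI. pose proof beta1_pos as Hb1.
  set (b := Rmin beta beta1).
  assert (Hbb : 0 < b <= beta) by (unfold b; split; [apply Rmin_glb_lt; lra| apply Rmin_l]).
  assert (Hbb1 : b <= beta1) by (unfold b; apply Rmin_r).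
  set (s0 := th b).
  assert (Hs0 : 0 < s0 < 1) by (unfold s0; split; [apply th_pos; lra| apply th_bound]).
  set (G := fun z => Gt phi (s0 * z)).
  assert (HG : Cg G).
  { intros z Hz. unfold G. apply (continuous_comp (fun z => s0 * z) (Gt phi)). cont.
    apply (Gt_cont beta phi); auto. split; nra. }
  assert (HE : forall a, 0 <= a <= PI/2 -> r / PI <= Ein G a).
  { intros a Ha. set (q := s0 * sin a).
    assert (Hsa : 0 <= sin a <= 1) by (split; [apply sin_ge_0; lra| apply SIN_bound]).
    assert (Hq : 0 <= q <= th b) by (unfold q; fold s0; split; nra).
    pose proof (Hcurve _ _ (gc_loop beta b q Hbb Hq)) as Hr.
    rewrite (gc_length beta phi b q H Hbb Hq) in Hr.
    apply div_le_l. auto.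
    replace (Ein G a) with (RInt (fun t => Gt phi (q * sin (PI * t))) 0 1). lra.
    unfold Ein, G. apply (RInt_ext (V:=R_CompleteNormedModule)). intros. toR. unfold q. f_equal. ring. }
  assert (HEo : r / PI <= Eo G).
  { unfold Eo. apply Rle_trans with (RInt (fun a => (r/PI) * sin a ^ 1) 0 (PI/2)).
    rewrite RInt_scal_R. fold (Bw 1). rewrite Bw1. lra. apply ex_RInt_cont. intros; cont.
    apply RInt_le. lra. apply ex_RInt_cont. intros; cont. apply ex_Eo; auto.
    intros a Ha. rewrite pow_1, Rmult_comm. apply Rmult_le_compat_l. left; apply sin_gt_0; lra.
    apply HE; lra. }
  rewrite Agree_all in HEo by auto.
  assert (exG : ex_RInt (Gt phi) 0 s0).
  { apply ex_RInt_cont'. lra. intros. apply (Gt_cont beta phi); auto. lra. }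
  assert (HComp : s0 * RInt G 0 1 = RInt (Gt phi) 0 s0).
  { assert (ex' : ex_RInt (Gt phi) (s0*0+0) (s0*1+0)).
    { replace (s0*0+0) with 0 by ring. replace (s0*1+0) with s0 by ring. auto. }
    pose proof (RInt_comp_lin (Gt phi) s0 0 0 1 ex') as L.
    replace (s0*0+0) with 0 in L by ring. replace (s0*1+0) with s0 in L by ring.
    rewrite <- L. rewrite <- RInt_scal_R. apply (RInt_ext (V:=R_CompleteNormedModule)).
    intros. toR. unfold G. replace (s0 * x + 0) with (s0 * x) by ring. reflexivity.
    apply ex01; auto. }
  assert (HSub : RInt (Gt phi) 0 s0 = RInt (fun y => phi 0 y * phi0 y) 0 b).
  { pose proof (RInt_comp (Gt phi) th (fun y => phi0 y ^ 2) 0 b) as L.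
    rewrite th_0 in L. fold s0 in L. rewrite <- L.
    - apply (RInt_ext (V:=R_CompleteNormedModule)). intros y Hy. toR.
      unfold Gt. rewrite ath_th. pose proof (phi0_th y). pose proof (phi0_pos y).
      replace (1 - th y ^ 2) with (phi0 y ^ 2) by lra. rewrite sqrt_pow2 by lra.
      unfold scal; simpl; unfold mult; simpl. field. lra.
    - intros x Hx. apply (Gt_cont beta phi); auto. apply th_bound.
    - intros x Hx. split. apply is_derive_th. cont2. }
  assert (HJ1 : r * s0 <= PI * RInt (fun y => phi 0 y * phi0 y) 0 b).
  { rewrite <- HSub, <- HComp.
    assert (r / PI * s0 <= RInt G 0 1 * s0) by (apply Rmult_le_compat_r; lra).
    replace (r * s0) with (PI * (r / PI * s0)) by (field; lra). apply Rmult_le_compat_l; lra. }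
  assert (Hh : forall y, b < y < beta -> r <= 2 * PI * phi 0 y).
  { intros y Hy. destruct (horiz beta phi y H) as [Hl Hlen]. lra. rewrite <- Hlen. apply Hcurve; auto. }
  assert (Hfc : forall y, continuous (fun y => phi 0 y) y) by apply (f_cont beta phi H).
  assert (Hmid1 : forall y, 0 < y < b -> phib 0 y = phi0 y).
  { intros y Hy. unfold phib. apply Rmax_left. apply phi0_ge_half. lra. }
  assert (Hmid2 : forall y, b < y < beta -> phib 0 y = 1/2).
  { intros y Hy. unfold phib. apply Rmax_right. apply phi0_le_half.
    unfold b in Hy. destruct (Rle_dec beta beta1). rewrite Rmin_left in Hy by lra. lra.
    rewrite Rmin_right in Hy by lra. lra. }
  assert (Ex : forall h : R -> R, (forall y, continuous h y) -> forall a c, a <= c -> ex_RInt h a c).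
  { intros h Hc a c Hac. apply ex_RInt_cont'. auto. intros; apply Hc. }
  assert (Hc1 : forall y, continuous (fun y => phi 0 y * phib 0 y) y).
  { intros y. apply (continuous_mult (fun y => phi 0 y) (fun y => phib 0 y)). auto. apply phib_cont. }
  assert (Hc2 : forall y, continuous (fun y => phib 0 y * phib 0 y) y).
  { intros y. apply (continuous_mult (fun y => phib 0 y) (fun y => phib 0 y)); apply phib_cont. }
  assert (Hphib_even : forall y, phib 0 (-y) = phib 0 y).
  { intros y. unfold phib. rewrite phi0_even. auto. }
  rewrite (even_int (fun y => phi 0 y * phib 0 y) beta Hb).
  2:{ intros; auto. }
  2:{ intros y Hy. rewrite Hphib_even, (f_even beta phi H) by auto. auto. }
  rewrite (even_int (fun y => phib 0 y * phib 0 y) beta Hb).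
  2:{ intros; auto. }
  2:{ intros y Hy. rewrite Hphib_even. auto. }
  rewrite <- (RInt_Chasles (fun y => phi 0 y * phib 0 y) 0 b beta) by (apply Ex; auto; lra).
  rewrite <- (RInt_Chasles (fun y => phib 0 y * phib 0 y) 0 b beta) by (apply Ex; auto; lra).
  change plus with Rplus.
  rewrite (RInt_ext (V:=R_CompleteNormedModule) (fun y => phi 0 y * phib 0 y) (fun y => phi 0 y * phi0 y) 0 b).
  2:{ intros y Hy. rewrite Rmin_left, Rmax_right in Hy by lra. toR. rewrite Hmid1; auto. }
  rewrite (RInt_ext (V:=R_CompleteNormedModule) (fun y => phi 0 y * phib 0 y) (fun y => (1/2) * phi 0 y) b beta).
  2:{ intros y Hy. rewrite Rmin_left, Rmax_right in Hy by lra. toR. rewrite Hmid2; auto. ring. }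
  rewrite (RInt_ext (V:=R_CompleteNormedModule) (fun y => phib 0 y * phib 0 y) (fun y => phi0 y ^ 2) 0 b).
  2:{ intros y Hy. rewrite Rmin_left, Rmax_right in Hy by lra. toR. rewrite Hmid1; auto. ring. }
  rewrite (RInt_ext (V:=R_CompleteNormedModule) (fun y => phib 0 y * phib 0 y) (fun _ => 1/4) b beta).
  2:{ intros y Hy. rewrite Rmin_left, Rmax_right in Hy by lra. toR. rewrite Hmid2; auto. field. }
  rewrite RInt_const_R, RInt_scal_R by (apply Ex; auto; lra).
  rewrite (RInt_derive_R th (fun y => phi0 y ^ 2) 0 b) by (intros; first [apply is_derive_th | cont2]).
  rewrite th_0. fold s0.
  assert (HJ2 : (beta - b) * (r / (2 * PI)) <= RInt (phi 0) b beta).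
  { rewrite <- RInt_const_R. apply RInt_le. lra. apply Ex. intros; cont. lra. apply Ex; auto. lra.
    intros y Hy. pose proof (Hh y Hy). pose proof (Hpos 0 y ltac:(lra)). apply div_le_l. lra. nra. }
  assert (E0 : PI * ((beta - b) * (r / (2 * PI))) = (beta - b) * r / 2) by (field; lra).
  assert (PI * RInt (phi 0) b beta >= (beta - b) * r / 2) by (rewrite <- E0; apply Rle_ge, Rmult_le_compat_l; lra).
  lra.
Qed.

Lemma L2ip_red beta (F H : R -> R -> R) (F0 H0 : R -> R) : 0 < beta ->
  (forall x y, -beta <= y <= beta -> F x y = F0 y) ->
  (forall x y, -beta <= y <= beta -> H x y = H0 y) ->
  L2ip beta F H = PI * RInt (fun y => F0 y * H0 y) (-beta) beta.
Proof.
  intros Hb HF HH. unfold L2ip.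
  rewrite (RInt_ext (V:=R_CompleteNormedModule) _ (fun _ => RInt (fun y => F0 y * H0 y) (-beta) beta)).
  rewrite RInt_const_R. toR. ring.
  intros x _. toR. apply (RInt_ext (V:=R_CompleteNormedModule)). intros y Hy.
  rewrite Rmin_left, Rmax_right in Hy by lra. toR. rewrite HF, HH by lra. auto.
Qed.

Lemma area_red beta (F : R -> R -> R) (F0 : R -> R) : 0 < beta ->
  (forall x y, -beta <= y <= beta -> F x y = F0 y) ->
  area beta F = PI * RInt (fun y => F0 y * F0 y) (-beta) beta.
Proof.
  intros Hb HF. unfold area.
  rewrite (RInt_ext (V:=R_CompleteNormedModule) _ (fun _ => RInt (fun y => F0 y * F0 y) (-beta) beta)).
  rewrite RInt_const_R. toR. ring.
  intros x _. toR. apply (RInt_ext (V:=R_CompleteNormedModule)). intros y Hy.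
  rewrite Rmin_left, Rmax_right in Hy by lra. toR. rewrite HF by lra. ring.
Qed.

Theorem lemma1p2 (beta : R) (phi : R -> R -> R)
  (hbeta : 0 < beta)
  (hsmooth : smooth2 phi)
  (hpos : forall x y, - beta <= y <= beta -> 0 < phi x y)
  (hA : forall x y, - beta <= y <= beta -> phi (x + PI) (- y) = phi x y)
  (hH : forall h x y, - beta <= y <= beta -> phi (x + h) y = phi x y) :
  area beta phi
    = area beta (Pphib beta phi)
      + L2norm2 beta (fun x y => phi x y - Pphib beta phi x y)
  /\ Rbar_le (sys beta phi) (sys beta (Pphib beta phi)).
Proof.
  assert (H : Hyps beta phi) by (repeat split; auto).
  pose proof PI_RGT_0 as HPI.
  assert (Hx : forall x y, -beta <= y <= beta -> phi x y = phi 0 y) by apply (phi_xind beta phi H).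
  set (f := fun y => phi 0 y). set (p := fun y => phib 0 y).
  assert (Hfc : forall y, continuous f y) by apply (f_cont beta phi H).
  assert (Hpc : forall y, continuous p y) by apply phib_cont.
  assert (Ex : forall h : R -> R, (forall y, continuous h y) -> ex_RInt h (-beta) beta).
  { intros h Hc. apply ex_RInt_cont'. lra. intros; apply Hc. }
  set (Ifp := RInt (fun y => f y * p y) (-beta) beta).
  set (Ipp := RInt (fun y => p y * p y) (-beta) beta).
  set (Iff := RInt (fun y => f y * f y) (-beta) beta).
  assert (HIpp : 0 < Ipp).
  { apply Rlt_le_trans with (RInt (fun _ => 1/4) (-beta) beta).
    rewrite RInt_const_R. lra.
    apply RInt_le. lra. apply Ex. intros; cont. apply Ex. intros. apply (continuous_mult p p); auto.
    intros y _. unfold p, phib. pose proof (Rmax_r (phi0 y) (1/2)). nra. }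
  assert (HIfp : 0 <= Ifp).
  { apply Rle_trans with (RInt (fun _ => 0) (-beta) beta).
    rewrite RInt_const_R. lra.
    apply RInt_le. lra. apply Ex. intros; cont. apply Ex. intros. apply (continuous_mult f p); auto.
    intros y Hy. unfold f, p, phib. pose proof (Rmax_r (phi0 y) (1/2)). pose proof (hpos 0 y ltac:(lra)). nra. }
  assert (Hcc : L2ip beta phi phib / L2ip beta phib phib = Ifp / Ipp).
  { rewrite (L2ip_red beta phi phib f p), (L2ip_red beta phib phib p p); auto.
    fold Ifp Ipp. field. lra. }
  set (cc := Ifp / Ipp).
  assert (HP : forall x y, Pphib beta phi x y = cc * phib x y).
  { intros. unfold Pphib. rewrite Hcc. auto. }
  split.
  - rewrite (area_red beta phi f) by auto.
    rewrite (area_red beta (Pphib beta phi) (fun y => cc * p y)).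
    2: auto. 2:{ intros. rewrite HP. auto. }
    unfold L2norm2. rewrite (L2ip_red beta _ _ (fun y => f y - cc * p y) (fun y => f y - cc * p y)); auto.
    2,3: intros; rewrite HP, Hx; auto.
    rewrite (RInt_ext (V:=R_CompleteNormedModule) (fun y => cc * p y * (cc * p y)) (fun y => (cc * cc) * (p y * p y))).
    2:{ intros; toR; ring. }
    rewrite (RInt_ext (V:=R_CompleteNormedModule) (fun y => (f y - cc * p y) * (f y - cc * p y))
               (fun y => f y * f y + ((-2 * cc) * (f y * p y) + (cc * cc) * (p y * p y)))).
    2:{ intros; toR; ring. }
    assert (Cff : forall y, continuous (fun y => f y * f y) y) by (intros; apply (continuous_mult f f); auto).
    assert (Cfp : forall y, continuous (fun y => f y * p y) y) by (intros; apply (continuous_mult f p); auto).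
    assert (Cpp : forall y, continuous (fun y => p y * p y) y) by (intros; apply (continuous_mult p p); auto).
    rewrite RInt_scal_R by (apply Ex; auto).
    rewrite RInt_plus_R. rewrite RInt_plus_R.
    rewrite !RInt_scal_R by (apply Ex; auto).
    fold Iff Ifp Ipp.
    unfold cc. field. lra.
    apply Ex; intros; apply (continuous_mult (fun _ => -2*cc) (fun y => f y * p y)); auto; apply continuous_const.
    apply Ex; intros; apply (continuous_mult (fun _ => cc*cc) (fun y => p y * p y)); auto; apply continuous_const.
    apply Ex; auto.
    apply Ex; intros. apply (continuous_plus (fun y => (-2*cc) * (f y * p y)) (fun y => (cc*cc) * (p y * p y))).
    apply (continuous_mult (fun _ => -2*cc) (fun y => f y * p y)); auto; apply continuous_const.
    apply (continuous_mult (fun _ => cc*cc) (fun y => p y * p y)); auto; apply continuous_const.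
  - assert (Hcc0 : 0 <= cc) by (unfold cc; apply Rmult_le_pos; [lra| left; apply Rinv_0_lt_compat; lra]).
    assert (Hlow : Rbar_le (Finite (cc * PI)) (sys beta (Pphib beta phi))).
    { unfold sys. apply Glb_Rbar_correct. intros L [g1 [g2 [Hl ->]]].
      simpl. unfold curve_length.
      rewrite (RInt_ext (V:=R_CompleteNormedModule) _
        (fun t => cc * (phib (g1 t) (g2 t) * sqrt (Derive g1 t ^ 2 + Derive g2 t ^ 2)))).
      2:{ intros; toR; rewrite HP; ring. }
      rewrite RInt_scal_R by (apply (len_ex beta); auto).
      apply Rmult_le_compat_l; auto. apply (lower_bound beta); auto. }
    assert (Hup : Rbar_le (sys beta phi) (Finite (cc * PI))).
    { destruct (Rbar_le_dec (sys beta phi) (Finite (cc * PI))) as [Hd|Hd]; auto.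
      exfalso. apply Rbar_not_le_lt in Hd.
      pose proof (Glb_Rbar_correct (fun L => exists g1 g2 : R -> R,
               noncontractible_loop_lift beta g1 g2 /\ L = curve_length phi g1 g2)) as [Hlb _].
      fold (sys beta phi) in Hlb.
      assert (exists r, cc * PI < r /\ forall g1 g2, noncontractible_loop_lift beta g1 g2 -> r <= curve_length phi g1 g2)
        as [r [Hr1 Hr2]].
      { destruct (sys beta phi) as [g| |] eqn:Es.
        - exists g. split. auto. intros g1 g2 Hl. apply (Hlb (curve_length phi g1 g2)). eauto.
        - exists (cc * PI + 1). split. lra. intros g1 g2 Hl.
          exfalso. apply (Hlb (curve_length phi g1 g2)). eauto.
        - simpl in Hd. contradiction. }
      pose proof (upper beta phi H r Hr2) as U. change (r * Ipp <= PI * Ifp) in U.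
      assert (r <= cc * PI).
      { unfold cc. apply Rmult_le_reg_r with Ipp. auto.
        replace (Ifp / Ipp * PI * Ipp) with (PI * Ifp) by (field; lra). lra. }
      lra. }
    eapply Rbar_le_trans; eauto.
Qed.
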